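(* Let $S$ be a stable subset of a stable $L^0$-module equipped with a stable topology $\mathscr T$. The following are equivalent: (i) $S$ is stable compact; (ii) every stable ultrafilter on $S$ has a cluster point in $S$; (iii) for every stable collection $\mathscr O$ of stable open sets with $S=\bigcup\mathscr O$ there is a stable finite subcollection $\tilde{\mathscr O}\subset\mathscr O$ with $S=\bigcup\tilde{\mathscr O}$; (iv) every stable collection $\mathscr C$ of stable closed subsets of $S$ such that $\bigcap\tilde{\mathscr C}\neq\emptyset$ for every stable finite subcollection $\tilde{\mathscr C}\subset\mathscr C$ satisfies $\bigcap\mathscr C\neq\emptyset$.
   Context: $L^0$ is the ring of real measurable functions on a probability space $(\Omega,\mathcal F,\mathbb P)$ modulo a.e. equality. An $L^0$-module $E$ is stable if for every countable measurable partition $(A_k)$ of $\Omega$ and $(x_k)\subset E$ there is a unique $x=\sum_k1_{A_k}x_k$ with $1_{A_k}x=1_{A_k}x_k$ for all $k$. A nonempty $S\subset E$ is stable if it contains all such concatenations of its elements. For stable sets $Y_k$, $\sum_k1_{A_k}Y_k:=\{\sum_k1_{A_k}y_k:y_k\in Y_k\}$; a nonempty collection of stable sets is stable if it is closed under this operation. For a nonempty collection $\mathscr X$ of stable sets, $\mathrm{st}(\mathscr X)=\{\sum_j1_{B_j}U_j:U_j\in\mathscr X,(B_j)\text{ countable measurable partition}\}$; a subcollection $\tilde{\mathscr O}$ of a stable collection $\mathscr O$ is stable finite if $\tilde{\mathscr O}=\{\sum_k1_{A_k}V_k:V_k\in\mathrm{st}(\mathscr O_k)\}$ for a countable measurable partition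 $(A_k)$ and finite nonempty $\mathscr O_k\subset\mathscr O$. A topology on $S$ is stable if it has a base which is a stable collection of stable sets. A filter on $S$ is stable if it has a filter base which is a stable collection of stable sets; a stable ultrafilter is a maximal stable filter. $S$ is stable compact if every stable filter on $S$ has a cluster point in $S$. *)

(* Defs.v *)
From Stdlib Require Import Reals ClassicalEpsilon List.
Set Implicit Arguments.
Open Scope R_scope.

Record ProbSpace (Omega : Type) := {
  meas : (Omega -> Prop) -> Prop;
  prob : (Omega -> Prop) -> R;
  meas_full : meas (fun _ => True);
  meas_compl : forall A, meas A -> meas (fun w => ~ A w);
  meas_cunion : forall A : nat -> Omega -> Prop,
      (forall n, meas (A n)) -> meas (fun w => exists n, A n w);
  prob_nonneg : forall A, meas A -> 0 <= prob A;
  prob_full : prob (fun _ => True) = 1;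
  prob_sigma_add : forall A : nat -> Omega -> Prop,
      (forall n, meas (A n)) ->
      (forall i j w, i <> j -> A i w -> A j w -> False) ->
      infinite_sum (fun n => prob (A n)) (prob (fun w => exists n, A n w))
}.
Arguments meas {Omega} _ _.
Arguments prob {Omega} _ _.

Section L0.
Context {Omega : Type} (PS : ProbSpace Omega).

(** real measurable functions (representatives of elements of L^0) *)
Definition measurable_fun (f : Omega -> R) : Prop :=
  forall c : R, meas PS (fun w => f w < c).

Definition null_set (N : Omega -> Prop) : Prop :=
  exists M, meas PS M /\ prob PS M = 0 /\ forall w, N w -> M w.

Definition ae_eq (f g : Omega -> R) : Prop := null_set (fun w => f w <> g w).

Definition ind (A : Omega -> Prop) : Omega -> R :=
  fun w => if excluded_middle_informative (A w) then 1 else 0.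

Definition partition (A : nat -> Omega -> Prop) : Prop :=
  (forall k, meas PS (A k)) /\
  (forall i j w, i <> j -> A i w -> A j w -> False) /\
  (forall w, exists k, A k w).
End L0.

(** An L^0-module: an abelian group E with an action of (representatives of)
    L^0 satisfying the module axioms; a.e.-equal functions act identically,
    so this is exactly a module over the quotient ring L^0. *)
Record L0Module {Omega : Type} (PS : ProbSpace Omega) (E : Type) := {
  zero : E;
  add : E -> E -> E;
  opp : E -> E;
  smul : (Omega -> R) -> E -> E;
  addA : forall x y z, add x (add y z) = add (add x y) z;
  addC : forall x y, add x y = add y x;
  add0 : forall x, add zero x = x;
  addN : forall x, add (opp x) x = zero;
  smul_addr : forall f x y, measurable_fun PS f ->
      smul f (add x y) = add (smul f x) (smul f y);
  smul_addl : forall f g x, measurable_fun PS f -> measurable_fun PS g ->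
      smul (fun w => f w + g w) x = add (smul f x) (smul g x);
  smul_mul : forall f g x, measurable_fun PS f -> measurable_fun PS g ->
      smul (fun w => f w * g w) x = smul f (smul g x);
  smul_one : forall x, smul (fun _ => 1) x = x;
  smul_ae : forall f g x, measurable_fun PS f -> measurable_fun PS g ->
      ae_eq PS f g -> smul f x = smul g x
}.
Arguments smul {Omega PS E} _ _ _.

Section Stable.
Context {Omega : Type} {PS : ProbSpace Omega} {E : Type} (M : L0Module PS E).

(** x = sum_k 1_{A_k} y_k *)
Definition is_concat (A : nat -> Omega -> Prop) (y : nat -> E) (x : E) : Prop :=
  forall k, smul M (ind (A k)) x = smul M (ind (A k)) (y k).

Definition stable_module : Prop :=
  forall A, partition PS A -> forall y : nat -> E, exists! x, is_concat A y x.

Definition stable_set (Y : E -> Prop) : Prop :=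
  (exists y, Y y) /\
  forall A (y : nat -> E), partition PS A -> (forall k, Y (y k)) ->
    forall x, is_concat A y x -> Y x.

Definition concat_sets (A : nat -> Omega -> Prop) (Y : nat -> E -> Prop) : E -> Prop :=
  fun x => exists y : nat -> E, (forall k, Y k (y k)) /\ is_concat A y x.

Definition stable_coll (X : (E -> Prop) -> Prop) : Prop :=
  (exists U, X U) /\ (forall U, X U -> stable_set U) /\
  forall A (Y : nat -> E -> Prop), partition PS A -> (forall k, X (Y k)) ->
    X (concat_sets A Y).

Definition st (X : (E -> Prop) -> Prop) : (E -> Prop) -> Prop :=
  fun V => exists B (U : nat -> E -> Prop),
    partition PS B /\ (forall j, X (U j)) /\ V = concat_sets B U.

Definition stable_finite_sub (O Ot : (E -> Prop) -> Prop) : Prop :=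
  exists (A : nat -> Omega -> Prop) (Ok : nat -> list (E -> Prop)),
    partition PS A /\
    (forall k, Ok k <> nil /\ forall U, In U (Ok k) -> O U) /\
    forall V, Ot V <-> exists Vk : nat -> E -> Prop,
        (forall k, st (fun U => In U (Ok k)) (Vk k)) /\ V = concat_sets A Vk.

Definition is_topology (S : E -> Prop) (T : (E -> Prop) -> Prop) : Prop :=
  (forall U, T U -> forall x, U x -> S x) /\
  T S /\ T (fun _ => False) /\
  (forall Us : (E -> Prop) -> Prop, (forall U, Us U -> T U) ->
     T (fun x => exists U, Us U /\ U x)) /\
  (forall U V, T U -> T V -> T (fun x => U x /\ V x)).

Definition is_base (T B : (E -> Prop) -> Prop) : Prop :=
  (forall U, B U -> T U) /\
  forall U, T U -> forall x, U x -> exists V, B V /\ V x /\ forall y, V y -> U y.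

Definition stable_topology (S : E -> Prop) (T : (E -> Prop) -> Prop) : Prop :=
  is_topology S T /\ exists B, is_base T B /\ stable_coll B.

Definition closed_in (S : E -> Prop) (T : (E -> Prop) -> Prop) (C : E -> Prop) : Prop :=
  (forall x, C x -> S x) /\ T (fun x => S x /\ ~ C x).

Definition is_filter (S : E -> Prop) (F : (E -> Prop) -> Prop) : Prop :=
  F S /\
  (forall U, F U -> exists x, U x) /\
  (forall U, F U -> forall x, U x -> S x) /\
  (forall U V, F U -> F V -> F (fun x => U x /\ V x)) /\
  (forall U V, F U -> (forall x, U x -> V x) -> (forall x, V x -> S x) -> F V).

Definition filter_base (F B : (E -> Prop) -> Prop) : Prop :=
  (forall U, B U -> F U) /\
  forall U, F U -> exists V, B V /\ forall x, V x -> U x.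

Definition stable_filter (S : E -> Prop) (F : (E -> Prop) -> Prop) : Prop :=
  is_filter S F /\ exists B, filter_base F B /\ stable_coll B.

Definition stable_ultrafilter (S : E -> Prop) (F : (E -> Prop) -> Prop) : Prop :=
  stable_filter S F /\
  forall G, stable_filter S G -> (forall U, F U -> G U) -> forall U, G U -> F U.

Definition cluster_point (S : E -> Prop) (T F : (E -> Prop) -> Prop) (x : E) : Prop :=
  S x /\ forall U, T U -> U x -> forall W, F W -> exists y, U y /\ W y.

Definition stable_compact (S : E -> Prop) (T : (E -> Prop) -> Prop) : Prop :=
  forall F, stable_filter S F -> exists x, cluster_point S T F x.
End Stable.

(* Main.v *)
From Pilot Require Import Defs.
From Stdlib Require Import Reals List Lra Lia Classical ClassicalEpsilon
  FunctionalExtensionality PropExtensionality Cantor.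
Set Implicit Arguments.
Open Scope R_scope.
Notation ind := Pilot.Defs.ind.
Notation partition := Pilot.Defs.partition.

Lemma set_ext {X : Type} (A B : X -> Prop) : (forall x, A x <-> B x) -> A = B.
Proof. intro H; apply functional_extensionality; intro x;
  apply propositional_extensionality; auto. Qed.

Lemma choice_nat {X : Type} (P : nat -> X -> Prop) :
  (forall n, exists x, P n x) -> exists f : nat -> X, forall n, P n (f n).
Proof.
  intro H. exists (fun n => proj1_sig (constructive_indefinite_description _ (H n))).
  intro n; exact (proj2_sig (constructive_indefinite_description _ (H n))).
Qed.

Lemma choice_gen {X Y : Type} (P : X -> Y -> Prop) :
  (forall n, exists x, P n x) -> exists f : X -> Y, forall n, P n (f n).
Proof.
  intro H. exists (fun n => proj1_sig (constructive_indefinite_description _ (H n))).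
  intro n; exact (proj2_sig (constructive_indefinite_description _ (H n))).
Qed.

Section Meas.
Context {Omega : Type} (PS : ProbSpace Omega).
Notation meas := (meas PS).
Notation P := (prob PS).

Lemma meas_ext A B : meas A -> (forall w, A w <-> B w) -> meas B.
Proof. intros H E; rewrite <- (set_ext _ _ E); auto. Qed.

Lemma meas_empty : meas (fun _ => False).
Proof. apply meas_ext with (fun w => ~ True). apply meas_compl, meas_full. tauto. Qed.

Lemma meas_compl' A : meas A -> meas (fun w => ~ A w).
Proof. apply meas_compl. Qed.

Lemma meas_union A B : meas A -> meas B -> meas (fun w => A w \/ B w).
Proof.
  intros HA HB. apply meas_ext with
    (fun w => exists n, (fun n => match n with 0 => A | _ => B end) n w).
  apply meas_cunion. intros [|n]; auto.
  intro w; split. intros [[|n] H]; auto. intros [H|H]. exists 0%nat; auto. exists 1%nat; auto.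
Qed.

Lemma meas_inter A B : meas A -> meas B -> meas (fun w => A w /\ B w).
Proof.
  intros HA HB. apply meas_ext with (fun w => ~ (~ A w \/ ~ B w)).
  apply meas_compl, meas_union; apply meas_compl; auto.
  intro w; tauto.
Qed.

Lemma meas_diff A B : meas A -> meas B -> meas (fun w => A w /\ ~ B w).
Proof. intros; apply meas_inter; auto; apply meas_compl; auto. Qed.

Lemma meas_cinter (A : nat -> Omega -> Prop) :
  (forall n, meas (A n)) -> meas (fun w => forall n, A n w).
Proof.
  intros H. apply meas_ext with (fun w => ~ exists n, ~ A n w).
  apply meas_compl, meas_cunion; intro; apply meas_compl; auto.
  intro w; split. intros H1 n; apply NNPP; intro; apply H1; eauto.
  intros H1 [n Hn]; auto.
Qed.

Lemma meas_cunion' (A : nat -> Omega -> Prop) :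
  (forall n, meas (A n)) -> meas (fun w => exists n, A n w).
Proof. apply meas_cunion. Qed.

Lemma meas_const (p : Prop) : meas (fun _ => p).
Proof.
  destruct (classic p).
  apply meas_ext with (fun _ => True). apply meas_full. tauto.
  apply meas_ext with (fun _ => False). apply meas_empty. tauto.
Qed.

Lemma meas_before (A : nat -> Omega -> Prop) n :
  (forall n, meas (A n)) -> meas (fun w => exists m, (m < n)%nat /\ A m w).
Proof.
  intro H. apply meas_cunion. intro m. apply meas_inter; auto. apply meas_const.
Qed.

Lemma sum_const_zero c : infinite_sum (fun _ => c) c -> c = 0.
Proof.
  intro H. destruct (Req_dec c 0) as [|Hc]; auto.
  assert (Hp : Rabs c / 2 > 0) by (apply Rabs_pos_lt in Hc; lra).
  destruct (H _ Hp) as [N HN].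
  assert (H1 := HN N (le_n _)). assert (H2 := HN (S N) (le_S _ _ (le_n _))).
  unfold R_dist in *. simpl in H2.
  assert (Rabs (sum_f_R0 (fun _ : nat => c) N + c - c - (sum_f_R0 (fun _ : nat => c) N - c)) <= Rabs (sum_f_R0 (fun _ : nat => c) N + c - c) + Rabs (sum_f_R0 (fun _ : nat => c) N - c)).
  { unfold Rminus at 1. eapply Rle_trans. apply Rabs_triang. rewrite Rabs_Ropp. lra. }
  replace (sum_f_R0 (fun _ : nat => c) N + c - c - (sum_f_R0 (fun _ : nat => c) N - c)) with c in H0 by ring.
  lra.
Qed.

Lemma prob_ext A B : (forall w, A w <-> B w) -> P A = P B.
Proof. intro E; rewrite (set_ext _ _ E); auto. Qed.

Lemma prob_empty : P (fun _ => False) = 0.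
Proof.
  assert (H := prob_sigma_add PS (fun _ => fun _ => False) (fun _ => meas_empty)).
  cbv beta in H.
  rewrite (prob_ext (fun w : Omega => exists _ : nat, False) (fun _ => False)) in H
    by (intro w; split; [intros [n Hn]; auto| tauto]). apply sum_const_zero. apply H. tauto.
Qed.


Lemma sum_eventually (f : nat -> R) N l :
  (forall n, (n >= N)%nat -> sum_f_R0 f n = l) -> infinite_sum f l.
Proof.
  intros H eps He. exists N. intros n Hn. rewrite H; auto. unfold R_dist.
  rewrite Rminus_diag, Rabs_R0; auto.
Qed.

Lemma prob_add A B : meas A -> meas B -> (forall w, A w -> B w -> False) ->
  P (fun w => A w \/ B w) = P A + P B.
Proof.
  intros HA HB D.
  set (F := fun n => match n with 0 => A | 1 => B | _ => fun _ => False end).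
  assert (HF : forall n, meas (F n)) by (intros [|[|n]]; simpl; auto using meas_empty).
  assert (H := prob_sigma_add PS F HF).
  assert (E : (fun w => exists n, F n w) = (fun w => A w \/ B w)).
  { apply set_ext; intro w; split. intros [[|[|n]] Hn]; simpl in Hn; tauto.
    intros [H1|H1]. exists 0%nat; auto. exists 1%nat; auto. }
  rewrite E in H. eapply uniqueness_sum. apply H.
  intros i j w Hij. destruct i as [|[|i]]; destruct j as [|[|j]]; simpl; try tauto;
    try (intros; eapply D; eauto); try lia.
  apply sum_eventually with 1%nat. intros n Hn.
  induction n. lia. destruct n. simpl. ring.
  rewrite sum_N_predN by lia. simpl pred. rewrite IHn by lia. unfold F. rewrite prob_empty. ring.
Qed.

Lemma prob_split A B : meas A -> meas B ->
  P A = P (fun w => A w /\ B w) + P (fun w => A w /\ ~ B w).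
Proof.
  intros HA HB. rewrite <- prob_add. apply prob_ext; intro w; tauto.
  apply meas_inter; auto. apply meas_diff; auto. tauto.
Qed.

Lemma prob_mono A B : meas A -> meas B -> (forall w, A w -> B w) -> P A <= P B.
Proof.
  intros HA HB Hs. rewrite (prob_split B A HB HA).
  replace (P (fun w => B w /\ A w)) with (P A).
  assert (0 <= P (fun w => B w /\ ~ A w)) by (apply prob_nonneg, meas_diff; auto). lra.
  apply prob_ext; intro w; split; auto; tauto.
Qed.

Lemma prob_le1 A : meas A -> P A <= 1.
Proof. intro; rewrite <- (prob_full PS). apply prob_mono; auto using meas_full. Qed.

Lemma prob_union_le A B : meas A -> meas B -> P (fun w => A w \/ B w) <= P A + P B.
Proof.
  intros HA HB. replace (P (fun w => A w \/ B w)) with (P (fun w => A w \/ (B w /\ ~ A w))).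
  rewrite prob_add; auto. assert (P (fun w => B w /\ ~ A w) <= P B).
  apply prob_mono; auto. apply meas_diff; auto. tauto. lra.
  apply meas_diff; auto. tauto. apply prob_ext; intro; tauto.
Qed.

Lemma sum_zero : infinite_sum (fun _ => 0) 0.
Proof. apply sum_eventually with 0%nat. intros n _. induction n; simpl; auto. rewrite IHn; ring. Qed.

Lemma prob_cunion_null (A : nat -> Omega -> Prop) :
  (forall n, meas (A n)) -> (forall n, P (A n) = 0) -> P (fun w => exists n, A n w) = 0.
Proof.
  intros HA H0.
  set (D := fun n w => A n w /\ ~ exists m, (m < n)%nat /\ A m w).
  assert (HD : forall n, meas (D n)) by (intro; apply meas_diff; auto; apply meas_before; auto).
  assert (H := prob_sigma_add PS D HD).
  replace (fun w => exists n, A n w) with (fun w => exists n, D n w).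
  eapply uniqueness_sum. apply H.
  { intros i j w Hij [Hi Ni] [Hj Nj]. destruct (Nat.lt_total i j) as [h|[h|h]].
    apply Nj; eauto. auto. apply Ni; eauto. }
  replace (fun n => P (D n)) with (fun _ : nat => 0). apply sum_zero.
  apply functional_extensionality; intro n. symmetry. apply Rle_antisym.
  rewrite <- (H0 n). apply prob_mono; auto. intros w [h _]; auto.
  apply prob_nonneg; auto.
  apply set_ext; intro w; split.
  { intros [n [Hn _]]; eauto. }
  { intros [n Hn]. induction n as [n IH] using (well_founded_induction Nat.lt_wf_0).
    destruct (classic (exists m, (m < n)%nat /\ A m w)) as [[m [h1 h2]]|h].
    apply (IH m h1 h2). exists n; split; auto. }
Qed.

Lemma prob_null_sub A B : meas A -> meas B -> (forall w, A w -> B w) -> P B = 0 -> P A = 0.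
Proof. intros. apply Rle_antisym. rewrite <- H2. apply prob_mono; auto. apply prob_nonneg; auto. Qed.

Lemma esssup (Fam : (Omega -> Prop) -> Prop) :
  (forall A, Fam A -> meas A) -> Fam (fun _ => False) ->
  (forall A B, Fam A -> Fam B -> Fam (fun w => A w \/ B w)) ->
  exists An : nat -> Omega -> Prop, (forall n, Fam (An n)) /\
    forall G, Fam G -> P (fun w => G w /\ ~ exists n, An n w) = 0.
Proof.
  intros Hm H0 Hu.
  set (Vals := fun r => exists A, Fam A /\ r = P A).
  assert (Hb : bound Vals). { exists 1. intros r [A [HA ->]]. apply prob_le1; auto. }
  destruct (completeness Vals Hb) as [s [Hs1 Hs2]]. { exists (P (fun _ => False)); eexists; eauto. }
  assert (Hn : forall n : nat, exists A, Fam A /\ P A > s - / INR (S n)).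
  { intro n. apply NNPP; intro C.
    assert (Hub : is_upper_bound Vals (s - / INR (S n))).
    { intros r [A [HA ->]]. apply Rnot_lt_le. intro; apply C; exists A; split; auto. }
    specialize (Hs2 _ Hub). assert (0 < / INR (S n)). apply Rinv_0_lt_compat, lt_0_INR; lia. lra. }
  destruct (choice_nat _ Hn) as [An HAn]. exists An. split. intro n; apply HAn.
  intros G HG. set (U := fun w => exists n, An n w).
  assert (HU : meas U) by (apply meas_cunion; intro n; apply Hm, HAn).
  assert (HGm := Hm _ HG).
  assert (Hnn : 0 <= P (fun w => G w /\ ~ U w)) by (apply prob_nonneg, meas_diff; auto).
  apply Rle_antisym; auto.
  apply Rnot_lt_le; intro Hpos.
  assert (forall n, P (fun w => G w /\ ~ U w) <= / INR (S n)).
  { intro n. destruct (HAn n) as [Fn Hlt]. assert (Hmn := Hm _ Fn).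
    assert (Hle : P (fun w => An n w \/ G w) <= s) by (apply Hs1; exists (fun w => An n w \/ G w); split; [apply Hu; auto | reflexivity]).
    assert (P (fun w => An n w \/ G w) = P (An n) + P (fun w => G w /\ ~ An n w)).
    { rewrite <- prob_add; auto. apply prob_ext; intro; tauto. apply meas_diff; auto. tauto. }
    assert (P (fun w => G w /\ ~ U w) <= P (fun w => G w /\ ~ An n w)).
    { apply prob_mono; try apply meas_diff; auto. intros w [h1 h2]; split; auto. intro; apply h2; exists n; auto. }
    lra. }
  destruct (archimed_cor1 _ Hpos) as [N [HN1 HN2]].
  specialize (H (pred N)). rewrite Nat.succ_pred_pos in H by lia. unfold U in H. lra.
Qed.

End Meas.

Section L0Basics.
Context {Omega : Type} {PS : ProbSpace Omega} {E : Type} (M : L0Module PS E).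
Notation meas := (@Pilot.Defs.meas Omega PS).
Notation P := (prob PS).
Notation smul := (smul M).
Notation add := (add M).
Notation zero := (zero M).
Notation opp := (opp M).
Implicit Types A B : Omega -> Prop.

Lemma add_cancel x a b : add x a = add x b -> a = b.
Proof.
  intro H. rewrite <- (add0 M a), <- (add0 M b), <- (addN M x), <- !(addA M), H. auto.
Qed.

Lemma add_idem_zero a : a = add a a -> a = zero.
Proof.
  intro H. apply (add_cancel a). rewrite (addC M a zero), (add0 M). symmetry; auto.
Qed.

Lemma meas_fun_const c : measurable_fun PS (fun _ => c).
Proof. intro d. apply meas_const. Qed.

Lemma meas_fun_ind A : meas A -> measurable_fun PS (ind A).
Proof.
  intros HA c. unfold ind.
  destruct (Rle_lt_dec c 0).
  { apply meas_ext with (fun _ => False). apply meas_empty.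
    intro w; destruct (excluded_middle_informative (A w)); split; try tauto; lra. }
  destruct (Rle_lt_dec c 1).
  { apply meas_ext with (fun w => ~ A w). apply meas_compl; auto.
    intro w; destruct (excluded_middle_informative (A w)); split; try tauto; lra. }
  apply meas_ext with (fun _ => True). apply meas_full.
  intro w; destruct (excluded_middle_informative (A w)); split; try tauto; lra.
Qed.

Lemma smul_zero x : smul (fun _ => 0) x = zero.
Proof.
  apply add_idem_zero. rewrite <- (smul_addl M); try apply meas_fun_const.
  f_equal. apply functional_extensionality; intro; ring.
Qed.

Lemma ind_mul A B w : ind A w * ind B w = ind (fun w => A w /\ B w) w.
Proof.
  unfold ind. destruct (excluded_middle_informative (A w)), (excluded_middle_informative (B w)),
    (excluded_middle_informative (A w /\ B w)); try tauto; ring.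
Qed.

Lemma smul_ind_ind A B x : meas A -> meas B ->
  smul (ind A) (smul (ind B) x) = smul (ind (fun w => A w /\ B w)) x.
Proof.
  intros HA HB. rewrite <- (smul_mul M); try apply meas_fun_ind; auto.
  f_equal. apply functional_extensionality; intro; apply ind_mul.
Qed.

Lemma ind_ext A B : (forall w, A w <-> B w) -> ind A = ind B.
Proof. intro H; rewrite (set_ext _ _ H); auto. Qed.

Definition eqon (A : Omega -> Prop) (x y : E) := smul (ind A) x = smul (ind A) y.

Lemma eqon_refl A x : eqon A x x.
Proof. reflexivity. Qed.
Lemma eqon_sym A x y : eqon A x y -> eqon A y x.
Proof. unfold eqon; auto. Qed.
Lemma eqon_trans A x y z : eqon A x y -> eqon A y z -> eqon A x z.
Proof. unfold eqon; intros; congruence. Qed.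

Lemma eqon_ext A B x y : (forall w, A w <-> B w) -> eqon A x y -> eqon B x y.
Proof. intros H; rewrite (set_ext _ _ H); auto. Qed.

Lemma eqon_sub A B x y : meas A -> meas B -> (forall w, B w -> A w) -> eqon A x y -> eqon B x y.
Proof.
  intros HA HB Hs H. unfold eqon in *.
  replace (ind B) with (ind (fun w => B w /\ A w)) by (apply ind_ext; intro w; split; [tauto | intro h; split; auto]).
  rewrite <- !smul_ind_ind; auto. rewrite H; auto.
Qed.

Lemma eqon_full x y : eqon (fun _ => True) x y -> x = y.
Proof.
  unfold eqon. replace (ind (fun _ : Omega => True)) with (fun _ : Omega => 1).
  rewrite !(smul_one M); auto.
  apply functional_extensionality; intro w; unfold ind;
    destruct (excluded_middle_informative True); tauto.
Qed.

Lemma eqon_null A x y : meas A -> P A = 0 -> eqon A x y.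
Proof.
  intros HA H0. unfold eqon.
  assert (Hae : ae_eq PS (ind A) (fun _ => 0)).
  { exists A; split; [auto | split; auto]. intros w Hw; unfold ind in Hw;
    destruct (excluded_middle_informative (A w)); auto; lra. }
  rewrite (@smul_ae _ _ _ M (ind A) (fun _ => 0) x), (@smul_ae _ _ _ M (ind A) (fun _ => 0) y);
    try apply meas_fun_ind; try apply meas_fun_const; auto.
  rewrite !smul_zero; auto.
Qed.

Lemma eqon_empty x y : eqon (fun _ => False) x y.
Proof. apply eqon_null. apply meas_empty. apply prob_empty. Qed.

Lemma eqon_smul A x y : meas A -> eqon A x y -> forall B, meas B -> eqon A (smul (ind B) x) (smul (ind B) y).
Proof.
  intros HA H B HB. unfold eqon in *. rewrite !smul_ind_ind; auto.
  replace (ind (fun w => A w /\ B w)) with (ind (fun w => B w /\ A w)) by (apply ind_ext; intro; tauto).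
  rewrite <- !smul_ind_ind; auto. rewrite H; auto.
Qed.

Lemma partition_meas (A : nat -> Omega -> Prop) : partition PS A -> forall k, meas (A k).
Proof. intros [H _]; auto. Qed.

Lemma eq_local (HE : stable_module M) (A : nat -> Omega -> Prop) x y : partition PS A -> (forall k, eqon (A k) x y) -> x = y.
Proof.
  intros HA H. destruct (HE A HA (fun _ => x)) as [z [Hz Hu]].
  transitivity z. symmetry; apply Hu; intro; reflexivity.
  apply Hu. intro k. symmetry. apply H.
Qed.

Definition part2 (A : Omega -> Prop) : nat -> Omega -> Prop :=
  fun k => match k with 0 => A | 1 => fun w => ~ A w | _ => fun _ => False end.

Lemma part2_partition A : meas A -> partition PS (part2 A).
Proof.
  intro HA. split; [|split].
  intros [|[|k]]; simpl; auto using meas_compl, meas_empty.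
  intros [|[|i]] [|[|j]] w Hij; simpl; try tauto; lia.
  intro w. destruct (classic (A w)). exists 0%nat; auto. exists 1%nat; auto.
Qed.

Definition disj (C : nat -> Omega -> Prop) : nat -> Omega -> Prop :=
  fun k => match k with
  | 0 => fun w => ~ exists n, C n w
  | S n => fun w => C n w /\ ~ exists m, (m < n)%nat /\ C m w end.

Lemma disj_partition C : (forall n, meas (C n)) -> partition PS (disj C).
Proof.
  intro HC. split; [|split].
  - intros [|n]; simpl. apply meas_compl, meas_cunion; auto.
    apply meas_diff; auto. apply meas_before; auto.
  - intros [|i] [|j] w Hij; simpl; try tauto.
    + intros H [h _]; apply H; eauto.
    + intros [h _] H; apply H; eauto.
    + intros [Hi Ni] [Hj Nj]. destruct (Nat.lt_total i j) as [h|[h|h]].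
      apply Nj; eauto. lia. apply Ni; eauto.
  - intro w. destruct (classic (exists n, C n w)) as [[n Hn]|H].
    + induction n as [n IH] using (well_founded_induction Nat.lt_wf_0).
      destruct (classic (exists m, (m < n)%nat /\ C m w)) as [[m [h1 h2]]|h].
      apply (IH m h1 h2). exists (S n); simpl; auto.
    + exists 0%nat; simpl; auto.
Qed.

Lemma disj_sub C n w : disj C (S n) w -> C n w.
Proof. simpl; tauto. Qed.

Lemma disj_cover C w : (exists n, C n w) -> exists n, disj C (S n) w.
Proof.
  intros [n Hn]. induction n as [n IH] using (well_founded_induction Nat.lt_wf_0).
  destruct (classic (exists m, (m < n)%nat /\ C m w)) as [[m [h1 h2]]|h].
  apply (IH m h1 h2). exists n; simpl; auto.
Qed.

Definition refine (A : nat -> Omega -> Prop) (B : nat -> nat -> Omega -> Prop) : nat -> Omega -> Prop :=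
  fun n w => A (fst (of_nat n)) w /\ B (fst (of_nat n)) (snd (of_nat n)) w.

Lemma refine_partition (A : nat -> Omega -> Prop) (B : nat -> nat -> Omega -> Prop) : partition PS A -> (forall k, partition PS (B k)) ->
  partition PS (refine A B).
Proof.
  intros [HA1 [HA2 HA3]] HB. split; [|split].
  - intro n; apply meas_inter; auto. apply HB.
  - intros i j w Hij [Hi1 Hi2] [Hj1 Hj2].
    destruct (Nat.eq_dec (fst (of_nat i)) (fst (of_nat j))) as [e|e].
    + rewrite e in Hi2. destruct (Nat.eq_dec (snd (of_nat i)) (snd (of_nat j))) as [e2|e2].
      * apply Hij. rewrite <- (cancel_to_of i), <- (cancel_to_of j).
        f_equal. destruct (of_nat i), (of_nat j); simpl in *; congruence.
      * destruct (HB (fst (of_nat j))) as [_ [D _]]. eapply D; eauto.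
    + eapply HA2; eauto.
  - intro w. destruct (HA3 w) as [k Hk]. destruct (HB k) as [_ [_ C]]. destruct (C w) as [j Hj].
    exists (to_nat (k, j)). unfold refine. rewrite cancel_of_to; simpl; auto.
Qed.

Lemma eqon_cup (HE : stable_module M) (C : nat -> Omega -> Prop) x y :
  (forall n, meas (C n)) -> (forall n, eqon (C n) x y) -> eqon (fun w => exists n, C n w) x y.
Proof.
  intros HC H. set (B := fun w => exists n, C n w).
  assert (HB : meas B) by (apply meas_cunion; auto).
  unfold eqon. apply (eq_local HE (disj_partition C HC)). intros [|n]; unfold eqon; rewrite !smul_ind_ind; auto;
    try apply (partition_meas (disj_partition C HC)).
  - replace (ind (fun w => disj C 0 w /\ B w)) with (fun _ : Omega => 0).
    rewrite !smul_zero; auto.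
    apply functional_extensionality; intro w; unfold ind;
      destruct (excluded_middle_informative (disj C 0 w /\ B w)) as [[h1 h2]|]; simpl in *; tauto.
  - rewrite (ind_ext (fun w => disj C (S n) w /\ B w) (disj C (S n))).
    apply eqon_sub with (C n); auto. apply (partition_meas (disj_partition C HC) (S n)).
    apply disj_sub.
    intro w; split; [tauto|]. intro h; split; auto. exists n; apply disj_sub; auto.
Qed.

Lemma eqon_union (HE : stable_module M) A B x y : meas A -> meas B ->
  eqon A x y -> eqon B x y -> eqon (fun w => A w \/ B w) x y.
Proof.
  intros HA HB H1 H2.
  apply eqon_ext with (fun w => exists n, (fun n => match n with 0 => A | _ => B end) n w).
  intro w; split. intros [[|n] h]; auto. intros [h|h]. exists 0%nat; auto. exists 1%nat; auto.
  apply eqon_cup; auto. intros [|n]; auto. intros [|n]; auto.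
Qed.

Lemma eqon_conull (HE : stable_module M) A x y : meas A -> P (fun w => ~ A w) = 0 ->
  eqon A x y -> x = y.
Proof.
  intros HA H0 H. apply eqon_full. apply eqon_ext with (fun w => A w \/ ~ A w).
  intro w; split; auto; tauto. apply eqon_union; auto. apply meas_compl; auto.
  apply eqon_null; auto. apply meas_compl; auto.
Qed.

Definition two (x y : E) : nat -> E := fun k => match k with 0 => x | _ => y end.

Lemma glue2 (HE : stable_module M) A x y : meas A ->
  exists z, eqon A z x /\ eqon (fun w => ~ A w) z y.
Proof.
  intro HA. destruct (HE _ (part2_partition A HA) (two x y)) as [z [Hz _]].
  exists z; split; [apply (Hz 0%nat)| apply (Hz 1%nat)].
Qed.

Lemma concat_exists (HE : stable_module M) (A : nat -> Omega -> Prop) (y : nat -> E) : partition PS A ->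
  exists x, is_concat M A y x.
Proof. intro HA. destruct (HE A HA y) as [x [Hx _]]; eauto. Qed.

End L0Basics.

Section StableSets.
Context {Omega : Type} {PS : ProbSpace Omega} {E : Type} (M : L0Module PS E).
Context (HE : stable_module M).
Notation meas := (@Pilot.Defs.meas Omega PS).
Notation P := (prob PS).
Notation eqon := (eqon M).
Notation partition := (Pilot.Defs.partition PS).
Implicit Types (A D Q : nat -> Omega -> Prop) (U V W : E -> Prop).

Lemma concat_iff A (Y : nat -> E -> Prop) x :
  concat_sets M A Y x <-> forall k, exists y, Y k y /\ eqon (A k) x y.
Proof.
  split.
  - intros [y [H1 H2]] k. exists (y k); split; auto. apply H2.
  - intro H. destruct (choice_nat _ H) as [y Hy]. exists y; split.
    intro k; apply Hy. intro k; apply Hy.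
Qed.

Lemma stable_glue U A x : stable_set M U -> partition A ->
  (forall k, exists y, U y /\ eqon (A k) x y) -> U x.
Proof.
  intros [_ HU] HA H. destruct (choice_nat _ H) as [y Hy].
  apply (HU A y HA). intro k; apply Hy. intro k; apply Hy.
Qed.

Lemma stable_ne U : stable_set M U -> exists x, U x.
Proof. intros [h _]; auto. Qed.

Lemma concat_mono A (Y Y' : nat -> E -> Prop) :
  (forall k x, Y k x -> Y' k x) -> forall x, concat_sets M A Y x -> concat_sets M A Y' x.
Proof. intros H x [y [h1 h2]]. exists y; split; auto. Qed.

Lemma concat_ne A (Y : nat -> E -> Prop) : partition A -> (forall k, exists y, Y k y) ->
  exists x, concat_sets M A Y x.
Proof.
  intros HA H. destruct (choice_nat _ H) as [y Hy].
  destruct (concat_exists HE y HA) as [x Hx]. exists x, y; auto.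
Qed.

Lemma eqon_refine_piece D (A : nat -> Omega -> Prop) j k :
  partition D -> partition A -> meas (fun w => D j w /\ A k w).
Proof. intros HD HA. apply meas_inter; apply partition_meas; auto. Qed.

Lemma eqon_from_pieces A D k x y : partition A -> partition D ->
  (forall j, eqon (fun w => A k w /\ D j w) x y) -> eqon (A k) x y.
Proof.
  intros HA HD H.
  apply eqon_ext with (fun w => exists j, A k w /\ D j w).
  { intro w; split. intros [j [h _]]; auto. intro h. destruct HD as [_ [_ C]].
    destruct (C w) as [j Hj]; eauto. }
  apply eqon_cup; auto. intro j; apply meas_inter; apply partition_meas; auto.
Qed.

Lemma eqon_restr (A B : Omega -> Prop) x y : meas A -> meas B ->
  eqon A x y -> eqon (fun w => A w /\ B w) x y.
Proof. intros HA HB H. apply eqon_sub with A; auto. apply meas_inter; auto. tauto. Qed.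

Lemma eqon_restr' (A B : Omega -> Prop) x y : meas A -> meas B ->
  eqon B x y -> eqon (fun w => A w /\ B w) x y.
Proof. intros HA HB H. apply eqon_sub with B; auto. apply meas_inter; auto. tauto. Qed.

Lemma concat_stable A (Y : nat -> E -> Prop) : partition A ->
  (forall k, stable_set M (Y k)) -> stable_set M (concat_sets M A Y).
Proof.
  intros HA HY. split.
  { apply concat_ne; auto. intro k; apply stable_ne; auto. }
  intros D z HD Hz x Hx.
  apply concat_iff. intro k.
  assert (H1 : forall j, exists y, Y k y /\ eqon (A k) (z j) y).
  { intro j. apply (proj1 (concat_iff A Y (z j)) (Hz j)). }
  destruct (choice_nat _ H1) as [yk Hyk].
  destruct (concat_exists HE yk HD) as [y Hy].
  exists y. split.
  - apply stable_glue with D; auto. intro j; exists (yk j); split; [apply Hyk| apply Hy].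
  - apply eqon_from_pieces with D; auto. intro j.
    apply eqon_trans with (z j).
    apply eqon_restr'; try apply partition_meas; auto. apply Hx.
    apply eqon_trans with (yk j).
    apply eqon_restr; try apply partition_meas; auto. apply Hyk.
    apply eqon_sym, eqon_restr'; try apply partition_meas; auto. apply Hy.
Qed.

Lemma concat_const A U : partition A -> stable_set M U -> concat_sets M A (fun _ => U) = U.
Proof.
  intros HA HU. apply set_ext; intro x; split.
  - intro H. apply stable_glue with A; auto. apply (proj1 (concat_iff _ _ _) H).
  - intro H. exists (fun _ => x); split; auto. intro; reflexivity.
Qed.

Lemma concat_sub A (Y : nat -> E -> Prop) S : partition A -> stable_set M S ->
  (forall k x, Y k x -> S x) -> forall x, concat_sets M A Y x -> S x.
Proof.
  intros HA HS HY x Hx. apply stable_glue with A; auto.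
  intro k. destruct (proj1 (concat_iff _ _ _) Hx k) as [y [h1 h2]]. eauto.
Qed.

Lemma concat_concat D (A : nat -> nat -> Omega -> Prop) (Y : nat -> nat -> E -> Prop) :
  partition D -> (forall j, partition (A j)) ->
  concat_sets M D (fun j => concat_sets M (A j) (Y j)) =
  concat_sets M (refine D A) (fun n => Y (fst (of_nat n)) (snd (of_nat n))).
Proof.
  intros HD HA. assert (HR := refine_partition A HD HA).
  apply set_ext; intro x; split.
  - intro H. apply concat_iff. intro n. unfold refine.
    destruct (proj1 (concat_iff _ _ _) H (fst (of_nat n))) as [c [Hc1 Hc2]].
    destruct (proj1 (concat_iff _ _ _) Hc1 (snd (of_nat n))) as [y [Hy1 Hy2]].
    exists y; split; auto. apply eqon_trans with c.
    apply eqon_restr; auto; apply partition_meas; auto.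
    apply eqon_restr'; auto; apply partition_meas; auto.
  - intro H. apply concat_iff. intro j.
    assert (H1 : forall k, exists y, Y j k y /\ eqon (refine D A (to_nat (j,k))) x y).
    { intro k. destruct (proj1 (concat_iff _ _ _) H (to_nat (j,k))) as [y Hy].
      rewrite cancel_of_to in Hy. simpl in Hy. eauto. }
    destruct (choice_nat _ H1) as [y Hy].
    destruct (concat_exists HE y (HA j)) as [c Hc].
    exists c. split. exists y; split; auto. intro k; apply Hy.
    apply eqon_from_pieces with (A j); auto. intro k.
    apply eqon_trans with (y k).
    apply eqon_ext with (refine D A (to_nat (j, k))).
    unfold refine; rewrite cancel_of_to; simpl; tauto. apply Hy.
    apply eqon_sym, eqon_restr'; try apply partition_meas; auto. apply Hc.
Qed.

Lemma st_concat (X : (E -> Prop) -> Prop) D (V : nat -> E -> Prop) : partition D ->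
  (forall j, st M X (V j)) -> st M X (concat_sets M D V).
Proof.
  intros HD HV.
  destruct (choice_nat _ HV) as [B HB].
  destruct (choice_nat _ HB) as [U HU].
  assert (EV : V = fun j => concat_sets M (B j) (U j)).
  { apply functional_extensionality; intro j. apply HU. }
  rewrite EV, concat_concat; auto. 2: intro j; apply HU.
  do 2 eexists; split; [|split; [|reflexivity]].
  apply refine_partition; auto. intro j; apply HU.
  intro n. apply HU.
Qed.

Lemma st_mono (X X' : (E -> Prop) -> Prop) V : (forall U, X U -> X' U) -> st M X V -> st M X' V.
Proof. intros H [B [U [h1 [h2 h3]]]]. exists B, U; auto. Qed.

Definition triv : nat -> Omega -> Prop := part2 (fun _ => True).

Lemma triv_partition : partition triv.
Proof. apply part2_partition, meas_full. Qed.

Lemma st_self (X : (E -> Prop) -> Prop) U : X U -> stable_set M U -> st M X U.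
Proof.
  intros H1 H2. exists triv, (fun _ => U). split; [apply triv_partition|split; auto].
  symmetry; apply concat_const; auto. apply triv_partition.
Qed.

Lemma st_stable (X : (E -> Prop) -> Prop) V : (forall U, X U -> stable_set M U) -> st M X V -> stable_set M V.
Proof. intros H [B [U [h1 [h2 ->]]]]. apply concat_stable; auto. Qed.

Lemma inter_stable U W : stable_set M U -> stable_set M W -> (exists x, U x /\ W x) ->
  stable_set M (fun x => U x /\ W x).
Proof.
  intros HU HW Hne. split; auto. intros A y HA Hy x Hx. split.
  apply (proj2 HU) with A y; auto. intro; apply Hy.
  apply (proj2 HW) with A y; auto. intro; apply Hy.
Qed.

Definition fam2 U V : nat -> E -> Prop := fun k => match k with 0 => U | _ => V end.

Lemma conc2_iff (A : Omega -> Prop) U V x : meas A -> (exists v, V v) ->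
  concat_sets M (part2 A) (fam2 U V) x <->
  (exists u, U u /\ eqon A x u) /\ (exists v, V v /\ eqon (fun w => ~ A w) x v).
Proof.
  intros HA [v0 Hv0]. rewrite concat_iff. split.
  - intro H. split; [apply (H 0%nat) | apply (H 1%nat)].
  - intros [H1 H2] [|[|k]]; simpl; auto. exists v0; split; auto. apply eqon_empty.
Qed.

Lemma glue2_mem U (A : Omega -> Prop) x y z : meas A -> stable_set M U ->
  U x -> U y -> eqon A z x -> eqon (fun w => ~ A w) z y -> U z.
Proof.
  intros HA HU Hx Hy H1 H2. apply stable_glue with (part2 A); auto.
  apply part2_partition; auto.
  intros [|[|k]]; simpl; eauto. exists x; split; auto. apply eqon_empty.
Qed.

End StableSets.

Section Topo.
Context {Omega : Type} {PS : ProbSpace Omega} {E : Type} (M : L0Module PS E).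
Context (HE : stable_module M).
Notation meas := (@Pilot.Defs.meas Omega PS).
Notation P := (prob PS).
Notation eqon := (eqon M).
Notation partition := (Pilot.Defs.partition PS).
Implicit Types (A D Q : nat -> Omega -> Prop) (U V W : E -> Prop).
Context (S : E -> Prop) (HS : stable_set M S).

Definition gen_filter (B : (E -> Prop) -> Prop) : (E -> Prop) -> Prop :=
  fun U => (forall x, U x -> S x) /\ exists V, B V /\ forall x, V x -> U x.

Lemma gen_stable_filter B : stable_coll M B -> (forall V, B V -> forall x, V x -> S x) ->
  (forall V1 V2, B V1 -> B V2 -> exists V3, B V3 /\ forall x, V3 x -> V1 x /\ V2 x) ->
  stable_filter M S (gen_filter B).
Proof.
  intros HB Hsub Hdir. split.
  - split; [|split; [|split; [|split]]].
    + destruct HB as [[V0 H0] _]. split; auto. exists V0; split; auto. apply Hsub; auto.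
    + intros U [_ [V [HV HVU]]]. destruct (stable_ne (proj1 (proj2 HB) V HV)) as [x Hx]; eauto.
    + intros U [h _]; auto.
    + intros U1 U2 [h1 [V1 [B1 S1]]] [h2 [V2 [B2 S2]]]. split. intros x [hx _]; auto.
      destruct (Hdir V1 V2 B1 B2) as [V3 [B3 S3]]. exists V3; split; auto.
      intros x hx; destruct (S3 x hx); auto.
    + intros U V [h [V' [B' S']]] HUV HVS. split; auto. exists V'; split; auto.
  - exists B. split; [split|]; auto.
    + intros V HV. split. apply Hsub; auto. exists V; auto.
    + intros U [_ [V [HV HVU]]]; eauto.
Qed.

Lemma filter_list (F : (E -> Prop) -> Prop) (L : list (E -> Prop)) : is_filter S F ->
  (forall U, In U L -> F U) -> F (fun x => S x /\ forall U, In U L -> U x).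
Proof.
  intros HF. destruct HF as [F1 [F2 [F3 [F4 F5]]]].
  induction L as [|a L IH]; intros HL.
  - replace (fun x => S x /\ forall U, In U nil -> U x) with S. apply F1.
    apply set_ext; intro x; simpl; split; tauto.
  - replace (fun x => S x /\ forall U, In U (a :: L) -> U x) with
      (fun x => a x /\ (S x /\ forall U, In U L -> U x)).
    + apply F4. apply HL; simpl; auto. apply IH; intros; apply HL; simpl; auto.
    + apply set_ext; intro x; simpl; split.
      * intros [g1 [g2 g3]]; split; auto. intros U [e|g]. subst; auto. apply g3; auto.
      * intros [g1 g2]; split. apply g2; left; auto. split; auto. intros; apply g2; right; auto.
Qed.

Lemma filter_base_stable (F B : (E -> Prop) -> Prop) : is_filter S F -> filter_base F B ->
  forall V, B V -> forall x, V x -> S x.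
Proof. intros HF [HB _] V HV. apply HF, HB; auto. Qed.

Lemma filter_ne (F : (E -> Prop) -> Prop) U : is_filter S F -> F U -> exists x, U x.
Proof. intros HF; apply HF. Qed.

Context (T : (E -> Prop) -> Prop) (HT : is_topology S T) (BT : (E -> Prop) -> Prop)
  (HBT : is_base T BT) (HBTs : stable_coll M BT).

Lemma open_sub U : T U -> forall x, U x -> S x.
Proof. apply HT. Qed.

Lemma base_nbhd U x : T U -> U x -> exists V, BT V /\ V x /\ forall y, V y -> U y.
Proof. intros; apply HBT; auto. Qed.

Lemma base_nbhd_S x : S x -> exists V, BT V /\ V x.
Proof. intro H. destruct (base_nbhd x (proj1 (proj2 HT)) H) as [V [h1 [h2 _]]]; eauto. Qed.

Lemma base_open V : BT V -> T V.
Proof. apply HBT. Qed.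

Lemma base_stable V : BT V -> stable_set M V.
Proof. apply HBTs. Qed.

Lemma base_glue2 (A : Omega -> Prop) U V : meas A -> BT U -> BT V ->
  BT (concat_sets M (part2 A) (fam2 U V)).
Proof.
  intros HA HU HV. apply HBTs. apply part2_partition; auto. intros [|k]; simpl; auto.
Qed.

Definition cl V : E -> Prop := fun x => S x /\ forall U, T U -> U x -> exists y, U y /\ V y.

Lemma closed_from_cl W : (forall x, W x -> S x) -> (forall x, cl W x -> W x) -> closed_in S T W.
Proof.
  intros Hs Hc. split; auto.
  replace (fun x => S x /\ ~ W x) with
    (fun x => exists U, (T U /\ forall y, U y -> ~ W y) /\ U x).
  apply HT. intros U [h _]; auto.
  apply set_ext; intro x; split.
  - intros [U [[h1 h2] h3]]. split. apply open_sub with U; auto. apply h2; auto.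
  - intros [h1 h2]. apply NNPP; intro C. apply h2, Hc. split; auto.
    intros U HU HUx. apply NNPP; intro C2. apply C. exists U; split; auto.
    split; auto. intros y hy hw. apply C2; eauto.
Qed.

Lemma closed_cl W x : closed_in S T W -> cl W x -> W x.
Proof.
  intros [Hs Ho] [Sx Hx]. apply NNPP; intro C.
  destruct (Hx _ Ho (conj Sx C)) as [y [[_ h1] h2]]. auto.
Qed.

Lemma cl_sub V x : cl V x -> S x.
Proof. intros [h _]; auto. Qed.

Lemma cl_incl V x : (forall y, V y -> S y) -> V x -> cl V x.
Proof. intros H Hx. split; auto. intros; eauto. Qed.

Lemma cl_closed V : closed_in S T (cl V).
Proof.
  apply closed_from_cl. apply cl_sub.
  intros x [Sx Hx]. split; auto. intros U HU HUx.
  destruct (Hx U HU HUx) as [y [Uy [Sy Hy]]]. apply Hy; auto.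
Qed.

Lemma cl_stable V : stable_set M V -> (forall x, V x -> S x) -> stable_set M (cl V).
Proof.
  intros HV HVS. split.
  { destruct (stable_ne HV) as [v Hv]. exists v. apply cl_incl; auto. }
  intros A z HA Hz x Hx. split.
  { apply (@stable_glue _ _ _ M _ A); auto. intro k; exists (z k); split. apply (cl_sub (Hz k)). apply Hx. }
  intros U HU HUx. destruct (base_nbhd x HU HUx) as [U0 [B0 [U0x U0U]]].
  assert (Hk : forall k, exists v, V v /\ exists p, U0 p /\ eqon (A k) v p).
  { intro k. destruct (base_nbhd_S (cl_sub (Hz k))) as [U' [B' U'z]].
    assert (HAk : meas (A k)) by (apply partition_meas; auto).
    destruct (Hz k) as [_ Hzk].
    destruct (Hzk _ (base_open (base_glue2 (A k) HAk B0 B'))) as [v [Hv1 Hv2]].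
    { apply (conc2_iff M (A k) U0 U' (z k) HAk (ex_intro _ _ U'z)). split.
      exists x; split; auto. apply eqon_sym, Hx. exists (z k); split; auto. apply eqon_refl. }
    exists v; split; auto.
    destruct (proj1 (conc2_iff M (A k) U0 U' v HAk (ex_intro _ _ U'z)) Hv1) as [[p [h1 h2]] _].
    eauto. }
  destruct (choice_nat _ Hk) as [v Hv].
  destruct (concat_exists HE v HA) as [y Hy].
  exists y. split. apply U0U.
  - apply (@stable_glue _ _ _ M _ A); [apply base_stable; auto | auto |].
    intro k. destruct (Hv k) as [_ [p [h1 h2]]].
    exists p; split; auto. apply eqon_trans with (v k); auto. apply Hy.
  - apply (@stable_glue _ _ _ M _ A); [auto | auto |]. intro k. exists (v k); split. apply Hv. apply Hy.
Qed.

Lemma concat_closed A (W : nat -> E -> Prop) : partition A ->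
  (forall k, stable_set M (W k)) -> (forall k, closed_in S T (W k)) ->
  closed_in S T (concat_sets M A W).
Proof.
  intros HA HWs HWc.
  assert (Hsub : forall x, concat_sets M A W x -> S x).
  { apply concat_sub; auto. intros k x; apply HWc. }
  apply closed_from_cl; auto.
  intros x [Sx Hx]. apply concat_iff. intro k.
  assert (HAk : meas (A k)) by (apply partition_meas; auto).
  destruct (stable_ne (HWs k)) as [wk Hwk].
  destruct (glue2 HE (A k) x wk HAk) as [yk [Hy1 Hy2]].
  exists yk. split; [|apply eqon_sym; auto].
  apply closed_cl; auto. split.
  { apply (@glue2_mem _ _ _ M _ (A k) x wk); auto. apply (proj1 (HWc k)); auto. }
  intros U HU HUy. destruct (base_nbhd yk HU HUy) as [U1 [B1 [U1y U1U]]].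
  destruct (base_nbhd_S Sx) as [Ux [Bx Uxx]].
  destruct (Hx _ (base_open (base_glue2 (A k) HAk B1 Bx))) as [z [Hz1 Hz2]].
  { apply (conc2_iff M (A k) U1 Ux x HAk (ex_intro _ _ Uxx)). split.
    exists yk; split; auto. apply eqon_sym; auto. exists x; split; auto. apply eqon_refl. }
  destruct (proj1 (conc2_iff M (A k) U1 Ux z HAk (ex_intro _ _ Uxx)) Hz1) as [[u [hu1 hu2]] _].
  destruct (proj1 (concat_iff M A W z) Hz2 k) as [w' [hw1 hw2]].
  destruct (glue2 HE (A k) z yk HAk) as [z' [Hz'1 Hz'2]].
  exists z'. split.
  - apply U1U. apply (@glue2_mem _ _ _ M _ (A k) u yk); auto.
    apply base_stable; auto. eapply eqon_trans; eauto.
  - apply (@glue2_mem _ _ _ M _ (A k) w' wk); auto.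
    eapply eqon_trans; eauto. eapply eqon_trans; eauto.
Qed.

End Topo.

Section IV.
Context {Omega : Type} {PS : ProbSpace Omega} {E : Type} (M : L0Module PS E).
Context (HE : stable_module M).
Notation meas := (@Pilot.Defs.meas Omega PS).
Notation P := (prob PS).
Notation eqon := (eqon M).
Notation partition := (Pilot.Defs.partition PS).
Implicit Types (A D Q : nat -> Omega -> Prop) (U V W : E -> Prop).
Context (S : E -> Prop) (HS : stable_set M S).
Context (T : (E -> Prop) -> Prop) (HT : is_topology S T) (BT : (E -> Prop) -> Prop)
  (HBT : is_base T BT) (HBTs : stable_coll M BT).

Lemma concat_refine_snd A B (Z : nat -> E -> Prop) (Y : nat -> E -> Prop) x :
  partition A -> partition B -> (forall j, stable_set M (Y j)) ->
  (forall n y, Z n y -> Y (snd (of_nat n)) y) ->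
  concat_sets M (refine A (fun _ => B)) Z x -> concat_sets M B Y x.
Proof.
  intros HA HB HY HZ Hx. apply concat_iff. intro j.
  assert (H1 : forall k, exists z, Z (to_nat (k, j)) z /\ eqon (refine A (fun _ => B) (to_nat (k,j))) x z).
  { intro k. apply (proj1 (concat_iff _ _ _ _) Hx). }
  destruct (choice_nat _ H1) as [z Hz].
  destruct (concat_exists HE z HA) as [y Hy].
  exists y. split.
  - apply (@stable_glue _ _ _ M _ A); auto. intro k. exists (z k); split.
    assert (H := HZ _ _ (proj1 (Hz k))). rewrite cancel_of_to in H. auto.
    apply Hy.
  - apply (eqon_from_pieces HE (A := B) (D := A)); auto. intro k.
    apply eqon_trans with (z k).
    + apply eqon_ext with (refine A (fun _ => B) (to_nat (k, j))).
      unfold refine; rewrite cancel_of_to; simpl; tauto. apply Hz.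
    + apply eqon_sym. apply eqon_sub with (A k); try apply meas_inter; try apply partition_meas; auto.
      tauto. apply Hy.
Qed.

Definition lint (L : list (E -> Prop)) : E -> Prop := fun x => forall U, In U L -> U x.

Section ItoIV.
Context (C : (E -> Prop) -> Prop) (HC : stable_coll M C) (HCc : forall U, C U -> closed_in S T U)
  (FIP : forall Ct, stable_finite_sub M C Ct -> exists x, forall V, Ct V -> V x).

Definition okL (L : list (E -> Prop)) := L <> nil /\ forall U, In U L -> C U.

Lemma lint_ne L : okL L -> exists x, lint L x.
Proof.
  intros [Hn HL].
  destruct (FIP (Ct := fun V => exists Vk : nat -> E -> Prop,
     (forall k, st M (fun U => In U L) (Vk k)) /\ V = concat_sets M triv Vk)) as [x Hx].
  { exists triv, (fun _ => L). split. apply triv_partition. split. intro; split; auto.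
    intro; tauto. }
  exists x. intros U HU. apply Hx. exists (fun _ => U). split.
  intro k. apply st_self; auto. apply HC; auto.
  symmetry; apply concat_const. apply triv_partition. apply HC; auto.
Qed.

Lemma lint_stable L : okL L -> stable_set M (lint L).
Proof.
  intros HL. split. apply lint_ne; auto.
  intros A y HA Hy x Hx U HU. apply (proj2 (proj1 (proj2 HC) U (proj2 HL U HU))) with A y; auto.
  intro k; apply Hy; auto.
Qed.

Lemma lint_sub L x : okL L -> lint L x -> S x.
Proof.
  intros [Hn HL] Hx. destruct L as [|U L]. congruence.
  apply (proj1 (HCc (HL U (or_introl eq_refl)))). apply Hx; left; auto.
Qed.

Definition Bc : (E -> Prop) -> Prop := fun V => exists A (L : nat -> list (E -> Prop)),
  partition A /\ (forall k, okL (L k)) /\ V = concat_sets M A (fun k => lint (L k)).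

Lemma Bc_coll : stable_coll M Bc.
Proof.
  split; [|split].
  - destruct HC as [[U0 H0] _]. exists (concat_sets M triv (fun _ => lint (U0 :: nil))).
    exists triv, (fun _ => U0 :: nil). split. apply triv_partition. split; auto.
    intro k; split. congruence. intros U [<-|[]]; auto.
  - intros V [A [L [HA [HL ->]]]]. apply concat_stable; auto. intro; apply lint_stable; auto.
  - intros D Y HD HY. destruct (choice_nat _ HY) as [A HA]. destruct (choice_nat _ HA) as [L HL].
    assert (EY : Y = fun j => concat_sets M (A j) (fun k => lint (L j k))).
    { apply functional_extensionality; intro j; apply HL. }
    rewrite EY, (concat_concat HE). 2: auto. 2: intro j; apply HL.
    exists (refine D A), (fun n => L (fst (of_nat n)) (snd (of_nat n))). split.
    apply refine_partition; auto. intro j; apply HL. split; auto. intro n; apply HL.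
Qed.

Lemma Bc_sub V x : Bc V -> V x -> S x.
Proof.
  intros [A [L [HA [HL ->]]]]. apply concat_sub; auto. intros k y; apply lint_sub; auto.
Qed.

Lemma okL_app L1 L2 : okL L1 -> okL L2 -> okL (L1 ++ L2).
Proof.
  intros [h1 h2] [h3 h4]. split. destruct L1; simpl; congruence.
  intros U HU. apply in_app_or in HU. destruct HU; auto.
Qed.

Lemma Bc_dir V1 V2 : Bc V1 -> Bc V2 -> exists V3, Bc V3 /\ forall x, V3 x -> V1 x /\ V2 x.
Proof.
  intros [A1 [L1 [HA1 [HL1 ->]]]] [A2 [L2 [HA2 [HL2 ->]]]].
  set (Z := fun n => lint (L1 (fst (of_nat n)) ++ L2 (snd (of_nat n)))).
  exists (concat_sets M (refine A1 (fun _ => A2)) Z). split.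
  { exists (refine A1 (fun _ => A2)), (fun n => L1 (fst (of_nat n)) ++ L2 (snd (of_nat n))).
    split. apply refine_partition; auto. split; auto. intro; apply okL_app; auto. }
  intros x Hx. split.
  - unfold Z in Hx. rewrite <- (@concat_concat _ _ _ M HE A1 (fun _ => A2) (fun k j => lint (L1 k ++ L2 j))) in Hx; auto.
    revert Hx. apply concat_mono. intros k y Hy.
    revert Hy. apply concat_sub; auto. apply lint_stable; auto.
    intros j z Hz U HU. apply Hz. apply in_or_app; auto.
  - revert Hx. apply concat_refine_snd; auto. intro; apply lint_stable; auto.
    intros n y Hy U HU. apply Hy. apply in_or_app; auto.
Qed.

Theorem i_to_iv : stable_compact M S T -> exists x, forall V, C V -> V x.
Proof.
  intro HK.
  destruct (HK (gen_filter S Bc)) as [x [Sx Hx]].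
  { apply gen_stable_filter. apply Bc_coll. intros V HV y; apply Bc_sub; auto. apply Bc_dir. }
  exists x. intros V HV. apply NNPP; intro C0.
  destruct (HCc HV) as [HVS HVo].
  destruct (Hx _ HVo (conj Sx C0) V) as [y [[_ h1] h2]]; auto.
  split; auto. exists V. split; auto.
  exists triv, (fun _ => V :: nil). split. apply triv_partition. split.
  intro; split. congruence. intros U [<-|[]]; auto.
  rewrite concat_const. apply set_ext; intro z; unfold lint; simpl; split.
  intros h U [<-|[]]; auto. intro h; apply h; auto.
  apply triv_partition. apply lint_stable. split. congruence. intros U [<-|[]]; auto.
Qed.
End ItoIV.

Section IVtoI.
Hypothesis IV : forall C : (E -> Prop) -> Prop, stable_coll M C ->
        (forall U, C U -> closed_in S T U) ->
        (forall Ct, stable_finite_sub M C Ct -> exists x, forall V, Ct V -> V x) ->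
        exists x, forall V, C V -> V x.

Theorem iv_to_i : stable_compact M S T.
Proof.
  intros F [HF [BF [HBF HBFs]]].
  set (Cc := fun W => stable_set M W /\ closed_in S T W /\ exists V, F V /\ forall x, V x -> W x).
  assert (BFsub : forall V x, BF V -> V x -> S x) by (intros; eapply filter_base_stable; eauto).
  destruct (IV (C := Cc)) as [x Hx].
  - split; [|split].
    + exists S. split; auto. split. split; auto.
      replace (fun x => S x /\ ~ S x) with (fun _ : E => False). apply HT.
      apply set_ext; intro; tauto.
      exists S; split; auto. apply HF.
    + intros U [h _]; auto.
    + intros A W HA HW. split; [|split].
      * apply concat_stable; auto. intro; apply HW.
      * apply (concat_closed HE HS HT HBT HBTs); auto; intro k; apply HW.
      * assert (Hb : forall k, exists b, BF b /\ forall x, b x -> W k x).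
        { intro k. destruct (HW k) as [_ [_ [V [HV HVW]]]].
          destruct (proj2 HBF V HV) as [b [Hb1 Hb2]]. exists b; split; auto. }
        destruct (choice_nat _ Hb) as [b Hbb].
        exists (concat_sets M A b). split.
        apply (proj1 HBF). apply HBFs; auto. intro; apply Hbb.
        apply concat_mono. intro k; apply Hbb.
  - intros U [_ [h _]]; auto.
  - intros Ct [A [Ok [HA [HOk HCt]]]].
    assert (Hw : forall k, exists w, S w /\ forall U, In U (Ok k) -> U w).
    { intro k. apply (filter_ne (S := S)) with (F := F). auto. apply filter_list; auto.
      intros U HU. destruct (proj2 (HOk k) U HU) as [_ [[HUS _] [V [HV HVU]]]].
      apply (proj2 (proj2 (proj2 (proj2 HF)))) with V; auto. }
    destruct (choice_nat _ Hw) as [w Hww].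
    destruct (concat_exists HE w HA) as [z Hz].
    exists z. intros V HV. apply HCt in HV. destruct HV as [Vk [HVk ->]].
    exists w. split; auto. intro k. destruct (HVk k) as [B [U [HB [HU ->]]]].
    exists (fun _ => w k). split. intro j. apply Hww; auto. intro; reflexivity.
  - exists x. split.
    + apply Hx. split; auto. split. split; auto.
      replace (fun x => S x /\ ~ S x) with (fun _ : E => False). apply HT.
      apply set_ext; intro; tauto. exists S; split; auto. apply HF.
    + intros U HU HUx W HW. destruct (proj2 HBF W HW) as [W' [HW'1 HW'2]].
      assert (Hcl : cl S T W' x).
      { apply Hx. split; [|split].
        apply (cl_stable HE HS HT HBT HBTs). apply HBFs; auto. intros; eapply BFsub; eauto.
        apply cl_closed; auto.
        exists W'. split. apply HBF; auto. intros; apply cl_incl; auto. intros; eapply BFsub; eauto. }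
      destruct (proj2 Hcl U HU HUx) as [y [h1 h2]]. eauto.
Qed.
End IVtoI.
End IV.

Section Zorn.
Variable X : Type.
Variables (R : X -> X -> Prop) (Pm : X -> Prop).
Hypothesis Rrefl : forall x, R x x.
Hypothesis Rtrans : forall x y z, R x y -> R y z -> R x z.
Definition chainZ (C : X -> Prop) := (forall x, C x -> Pm x) /\ forall x y, C x -> C y -> R x y \/ R y x.
Hypothesis ub : forall C, chainZ C -> exists u, Pm u /\ forall x, C x -> R x u.

Section Contra.
Variable g : (X -> Prop) -> X.
Hypothesis Hg : forall C, chainZ C -> Pm (g C) /\ forall x, C x -> R x (g C) /\ ~ R (g C) x.

Definition succ (c : X -> Prop) : X -> Prop := fun x => c x \/ x = g c.
Definition subs (c d : X -> Prop) := forall x, c x -> d x.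

Inductive CC : (X -> Prop) -> Prop :=
| cc_succ c : CC c -> CC (succ c)
| cc_union (s : (X -> Prop) -> Prop) : (forall c, s c -> CC c) -> CC (fun x => exists c, s c /\ c x).

Lemma subs_succ c : subs c (succ c).
Proof. intros x h; left; auto. Qed.

Lemma aux c1 : CC c1 -> forall c2, (forall c3, CC c3 -> subs c3 c2 -> c2 = c3 \/ subs (succ c3) c2) ->
  subs (succ c2) c1 \/ subs c1 c2.
Proof.
  induction 1 as [c3 H3 IH|s Hs IH]; intros c2 h.
  - destruct (IH c2 h) as [h1|h1].
    + left. intros x hx. apply subs_succ, h1; auto.
    + destruct (h c3 H3 h1) as [e|h2]. subst. left; intros x hx; auto. right; auto.
  - destruct (classic (subs (succ c2) (fun x => exists c, s c /\ c x))) as [h1|h1]; auto.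
    right. intros x [a [ha hx]]. destruct (IH a ha c2 h) as [h2|h2]; auto.
    exfalso; apply h1. intros y hy. exists a; split; auto.
Qed.

Lemma total_succ c2 : CC c2 -> forall c1, CC c1 -> subs c1 c2 -> c2 = c1 \/ subs (succ c1) c2.
Proof.
  induction 1 as [c H IH|s Hs IH]; intros c1 H1 h.
  - destruct (aux H1 (fun c3 h3 h4 => IH c3 h3 h4)) as [h2|h2].
    + left. apply set_ext; intro x; split; auto.
    + destruct (IH c1 H1 h2) as [e|h3]. subst; right; intros x hx; auto.
      right. intros x hx. apply subs_succ, h3; auto.
  - destruct (classic (subs (fun x => exists c, s c /\ c x) c1)) as [h1|h1].
    + left. apply set_ext; intro x; split; auto.
    + destruct (classic (subs (succ c1) (fun x => exists c, s c /\ c x))) as [h2|h2]; auto.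
      exfalso. apply h1. intros x [a [ha hx]].
      destruct (aux H1 (c2 := a) (fun c3 h3 h4 => IH a ha c3 h3 h4)) as [h3|h3].
      * apply h3, subs_succ; auto.
      * destruct (IH a ha c1 H1 h3) as [e|h4].
        subst; auto.
        exfalso; apply h2. intros y hy. exists a; split; auto.
Qed.

Lemma total c1 c2 : CC c1 -> CC c2 -> subs c1 c2 \/ subs c2 c1.
Proof.
  intros H1 H2. destruct (aux H2 (c2 := c1) (fun c3 h3 h4 => total_succ H1 h3 h4)) as [h|h]; auto.
  left. intros x hx. apply h, subs_succ; auto.
Qed.

Lemma CC_chain c : CC c -> chainZ c.
Proof.
  induction 1 as [c H IH|s Hs IH].
  - split.
    + intros x [hx|hx]; [apply IH; auto| subst; apply Hg; auto].
    + intros x y [hx|hx] [hy|hy]; try subst x; try subst y.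
      apply IH; auto. left; apply Hg; auto. right; apply Hg; auto. left; auto.
  - split.
    + intros x [a [ha hx]]. apply (IH a ha); auto.
    + intros x y [a [ha hx]] [b [hb hy]].
      destruct (total (Hs a ha) (Hs b hb)) as [h|h].
      apply (IH b hb); auto. apply (IH a ha); auto.
Qed.

Lemma contra_false : False.
Proof.
  set (U := fun x => exists c, CC c /\ c x).
  assert (HU : CC U) by (apply cc_union; auto).
  assert (HS : CC (succ U)) by (apply cc_succ; auto).
  assert (Hin : U (g U)). { exists (succ U); split; auto. right; auto. }
  destruct (Hg (CC_chain HU)) as [_ h]. destruct (h _ Hin) as [_ h2]. auto.
Qed.
End Contra.

Theorem zorn : exists m, Pm m /\ forall y, Pm y -> R m y -> R y m.
Proof.
  apply NNPP; intro H.
  assert (Hs : forall m, Pm m -> exists y, Pm y /\ R m y /\ ~ R y m).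
  { intros m Hm. apply NNPP; intro C. apply H. exists m; split; auto.
    intros y Hy Hmy. apply NNPP; intro C2. apply C. eauto. }
  destruct (ub (C := fun _ => False)) as [x0 _]. { split; intros; tauto. }
  assert (Hg : forall C, exists y, chainZ C -> Pm y /\ forall x, C x -> R x y /\ ~ R y x).
  { intro C. destruct (classic (chainZ C)) as [hc|hc]; [|exists x0; tauto].
    destruct (ub hc) as [u [Hu Hxu]]. destruct (Hs u Hu) as [y [Hy [Huy Hyu]]].
    exists y. intros _. split; auto. intros x hx. split.
    apply Rtrans with u; auto. intro h. apply Hyu. apply Rtrans with x; auto. }
  destruct (choice_gen _ Hg) as [g Hg'].
  apply (@contra_false g). intros C HC. apply Hg'; auto.
Qed.
End Zorn.

Section Ultra.
Context {Omega : Type} {PS : ProbSpace Omega} {E : Type} (M : L0Module PS E).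
Context (HE : stable_module M).
Notation meas := (@Pilot.Defs.meas Omega PS).
Notation eqon := (eqon M).
Notation partition := (Pilot.Defs.partition PS).
Implicit Types (A D Q : nat -> Omega -> Prop) (U V : E -> Prop).
Context (S : E -> Prop) (HS : stable_set M S).

Definition fsub (G1 G2 : (E -> Prop) -> Prop) := forall U, G1 U -> G2 U.

Section UB.
Variable F : (E -> Prop) -> Prop.
Hypothesis HF : stable_filter M S F.
Variable C : ((E -> Prop) -> Prop) -> Prop.
Hypothesis HC : chainZ fsub (fun G => stable_filter M S G /\ fsub F G) C.

Definition Fam U := stable_set M U /\ (F U \/ exists G, C G /\ G U).

Lemma GF_filter G : G = F \/ C G -> stable_filter M S G.
Proof. intros [->|h]; auto. apply HC; auto. Qed.

Lemma Fam_common U1 U2 : Fam U1 -> Fam U2 -> exists G, (G = F \/ C G) /\ G U1 /\ G U2.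
Proof.
  intros [_ [h1|[G1 [C1 h1]]]] [_ [h2|[G2 [C2 h2]]]].
  - exists F; auto.
  - exists G2. split. auto. split; auto. apply (proj1 HC G2 C2); auto.
  - exists G1. split. auto. split; auto. apply (proj1 HC G1 C1); auto.
  - destruct (proj2 HC G1 G2 C1 C2) as [h|h].
    exists G2; split; auto.
    exists G1; split; auto.
Qed.

Lemma Fam_sub U x : Fam U -> U x -> S x.
Proof.
  intros HU Hx. destruct (Fam_common HU HU) as [G [HG [h _]]].
  destruct (GF_filter HG) as [HG' _]. eapply HG'; eauto.
Qed.

Lemma Fam_inter U1 U2 : Fam U1 -> Fam U2 -> Fam (fun x => U1 x /\ U2 x).
Proof.
  intros H1 H2. destruct (Fam_common H1 H2) as [G [HGo [G1 G2]]].
  destruct (GF_filter HGo) as [HG _].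
  assert (HGi : G (fun x => U1 x /\ U2 x)) by (apply HG; auto).
  split. apply inter_stable. apply H1. apply H2. eapply HG; eauto.
  destruct HGo as [->|h]; auto. right; eauto.
Qed.

Definition Bstar : (E -> Prop) -> Prop := fun V => exists A (W : nat -> E -> Prop),
  partition A /\ (forall k, Fam (W k)) /\ V = concat_sets M A W.

Lemma Bstar_coll : stable_coll M Bstar.
Proof.
  split; [|split].
  - exists (concat_sets M triv (fun _ => S)), triv, (fun _ => S). split. apply triv_partition.
    split; auto. intro; split; auto. left; apply HF.
  - intros V [A [W [HA [HW ->]]]]. apply concat_stable; auto. intro; apply HW.
  - intros D Y HD HY. destruct (choice_nat _ HY) as [A HA]. destruct (choice_nat _ HA) as [W HW].
    assert (EY : Y = fun j => concat_sets M (A j) (W j)).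
    { apply functional_extensionality; intro j; apply HW. }
    rewrite EY, (concat_concat HE). 2: auto. 2: intro j; apply HW.
    exists (refine D A), (fun n => W (fst (of_nat n)) (snd (of_nat n))). split.
    apply refine_partition; auto. intro j; apply HW. split; auto. intro n; apply HW.
Qed.

Lemma Bstar_sub V x : Bstar V -> V x -> S x.
Proof.
  intros [A [W [HA [HW ->]]]]. apply concat_sub; auto. intros k y; apply Fam_sub; auto.
Qed.

Lemma Bstar_dir V1 V2 : Bstar V1 -> Bstar V2 -> exists V3, Bstar V3 /\ forall x, V3 x -> V1 x /\ V2 x.
Proof.
  intros [A1 [W1 [HA1 [HW1 ->]]]] [A2 [W2 [HA2 [HW2 ->]]]].
  exists (concat_sets M (refine A1 (fun _ => A2))
      (fun n => fun x => W1 (fst (of_nat n)) x /\ W2 (snd (of_nat n)) x)). split.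
  { exists (refine A1 (fun _ => A2)), (fun n => fun x => W1 (fst (of_nat n)) x /\ W2 (snd (of_nat n)) x).
    split. apply refine_partition; auto. split; auto. intro; apply Fam_inter; auto. }
  intros x Hx. split.
  - rewrite <- (@concat_concat _ _ _ M HE A1 (fun _ => A2) (fun k j => fun x => W1 k x /\ W2 j x)) in Hx; auto.
    revert Hx. apply concat_mono. intros k y Hy.
    revert Hy. apply concat_sub; auto. apply HW1.
    intros j z Hz. apply Hz.
  - revert Hx. apply concat_refine_snd; auto. intro; apply HW2.
    intros n y Hy. apply Hy.
Qed.

Lemma Fam_base G U : (G = F \/ C G) -> G U -> exists b, Fam b /\ forall x, b x -> U x.
Proof.
  intros HGo HU. destruct (GF_filter HGo) as [HG [B [HB HBs]]].
  destruct (proj2 HB U HU) as [b [Hb1 Hb2]]. exists b. split; auto.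
  split. apply HBs; auto. destruct HGo as [->|h]. left; apply HB; auto. right; exists G; split; auto. apply HB; auto.
Qed.

Lemma chain_ub : exists u, (stable_filter M S u /\ fsub F u) /\ forall G, C G -> fsub G u.
Proof.
  exists (gen_filter S Bstar). assert (HBs := Bstar_coll).
  assert (Hgen : stable_filter M S (gen_filter S Bstar)).
  { apply gen_stable_filter; auto. intros V HV y; apply Bstar_sub; auto. apply Bstar_dir. }
  assert (Hin : forall G, (G = F \/ C G) -> fsub G (gen_filter S Bstar)).
  { intros G HGo U HU. destruct (@Fam_base G U HGo HU) as [b [Hb1 Hb2]].
    split. destruct (GF_filter HGo) as [HG _]. intros; eapply HG; eauto.
    exists b. split; auto. exists triv, (fun _ => b). split. apply triv_partition.
    split; auto. symmetry; apply concat_const. apply triv_partition. apply Hb1. }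
  split. split; auto. intros G HG; apply Hin; auto.
Qed.
End UB.

Theorem ii_to_i (T : (E -> Prop) -> Prop) :
  (forall F, stable_ultrafilter M S F -> exists x, cluster_point S T F x) -> stable_compact M S T.
Proof.
  intros H F HF.
  destruct (@zorn _ fsub (fun G => stable_filter M S G /\ fsub F G)) as [m [[Hm1 Hm2] Hm3]].
  - intros G U; auto.
  - intros G1 G2 G3 h1 h2 U hU; auto.
  - intros C HC. apply chain_ub; auto.
  - destruct (H m) as [x [Sx Hx]].
    { split; [auto|]. intros G HG Hsub. apply Hm3; [split; [auto| intros U HU; auto] | auto]. }
    exists x; split; [auto|]. intros U HU Ux W HW. apply Hx; auto.
Qed.
End Ultra.

Section Exhaust.
Context {Omega : Type} (PS : ProbSpace Omega).
Notation meas := (@Pilot.Defs.meas Omega PS).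
Notation P := (prob PS).

Definition disjoint (D : nat -> Omega -> Prop) := forall i j w, i <> j -> D i w -> D j w -> False.

Lemma disj_eq D n w : disjoint D -> (disj D (S n) w <-> D n w).
Proof.
  intro HD. simpl. split. tauto. intro h; split; auto.
  intros [m [hm h2]]. apply (HD m n w); auto. lia.
Qed.

Lemma exhaust (Pp : (Omega -> Prop) -> Prop) (K : Omega -> Prop) :
  meas K ->
  (forall A B, meas A -> meas B -> (forall w, B w -> A w) -> Pp A -> Pp B) ->
  Pp (fun _ => False) ->
  (forall D, (forall n, meas (D n)) -> disjoint D -> (forall n, Pp (D n)) ->
     Pp (fun w => exists n, D n w)) ->
  exists G, meas G /\ (forall w, G w -> K w) /\ Pp G /\
    forall A', meas A' -> (forall w, A' w -> K w /\ ~ G w) -> Pp A' -> P A' = 0.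
Proof.
  intros HK Hher H0 Hcup.
  assert (Hbin : forall A B, meas A -> meas B -> Pp A -> Pp B -> Pp (fun w => A w \/ B w)).
  { intros A B HA HB PA PB.
    set (D := fun n => match n with 0 => A | 1 => fun w => B w /\ ~ A w | _ => fun _ => False end).
    assert (HD : forall n, meas (D n)).
    { intros [|[|n]]; simpl; auto. apply meas_diff; auto. apply meas_empty. }
    apply Hher with (fun w => exists n, D n w). apply meas_cunion; auto.
    apply meas_union; auto. intros w [h|h]. exists 0%nat; auto.
    destruct (classic (A w)). exists 0%nat; auto. exists 1%nat; simpl; auto.
    apply Hcup; auto.
    intros [|[|i]] [|[|j]] w Hij; simpl; try tauto; lia.
    intros [|[|n]]; simpl; auto. apply Hher with B; auto. apply meas_diff; auto. tauto.
    }
  destruct (esssup PS (fun A => meas A /\ (forall w, A w -> K w) /\ Pp A)) as [An [HAn Hess]].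
  - tauto.
  - split. apply meas_empty. split; auto. tauto.
  - intros A B [h1 [h2 h3]] [g1 [g2 g3]]. split. apply meas_union; auto.
    split. intros w [h|h]; auto. apply Hbin; auto.
  - exists (fun w => exists n, An n w). split. apply meas_cunion; intro; apply HAn.
    split. intros w [n h]. apply (HAn n); auto.
    split.
    + apply Hher with (fun w => exists n, disj An (S n) w).
      apply meas_cunion; intro; apply (partition_meas (disj_partition An (fun n => proj1 (HAn n))) (S n)).
      apply meas_cunion; intro; apply HAn.
      intros w h. apply disj_cover; auto.
      apply Hcup.
      * intro n. apply (partition_meas (disj_partition An (fun n => proj1 (HAn n))) (S n)).
      * intros i j w Hij h1 h2. destruct (disj_partition An (fun n => proj1 (HAn n))) as [_ [D _]].
        apply (D (S i) (S j) w); auto.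
      * intro n. apply Hher with (An n). apply HAn. apply (partition_meas (disj_partition An (fun n => proj1 (HAn n))) (S n)).
        intros w h; apply disj_sub with (n := n); auto. apply HAn.
    + intros A' HA' Hsub PA'. rewrite <- (Hess A').
      apply prob_ext. intro w; split. intro h; split; auto. apply Hsub; auto. tauto.
      split; auto. split; auto. intros w h; apply Hsub; auto.
Qed.

Lemma prob_zero_split A G : meas A -> meas G -> P (fun w => A w /\ G w) = 0 ->
  P (fun w => A w /\ ~ G w) = 0 -> P A = 0.
Proof. intros. rewrite (prob_split PS A G); auto. lra. Qed.

Lemma prob_cover_null A (D : nat -> Omega -> Prop) : meas A -> (forall n, meas (D n)) ->
  (forall w, A w -> exists n, D n w) -> (forall n, P (fun w => A w /\ D n w) = 0) -> P A = 0.
Proof.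
  intros HA HD Hc H0. rewrite <- (prob_cunion_null PS (fun n w => A w /\ D n w)); auto.
  apply prob_ext. intro w; split. intro h; destruct (Hc w h) as [n hn]; eauto. intros [n [h _]]; auto.
  intro; apply meas_inter; auto.
Qed.

Lemma prob_pos_or_zero A : meas A -> P A = 0 \/ P A > 0.
Proof. intro HA. assert (0 <= P A) by (apply prob_nonneg; auto). lra. Qed.

End Exhaust.

Section ListBase.
Context {Omega : Type} {PS : ProbSpace Omega} {E : Type} (M : L0Module PS E).
Context (HE : stable_module M).
Notation partition := (Pilot.Defs.partition PS).
Context (S : E -> Prop) (HS : stable_set M S).
Variable Phi : list (E -> Prop) -> E -> Prop.
Variable okP : list (E -> Prop) -> Prop.
Hypothesis okP_app : forall L1 L2, okP L1 -> okP L2 -> okP (L1 ++ L2).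
Hypothesis okP_ex : exists L, okP L.
Hypothesis Phi_stable : forall L, okP L -> stable_set M (Phi L).
Hypothesis Phi_sub : forall L x, okP L -> Phi L x -> S x.
Hypothesis Phi_app1 : forall L1 L2 x, okP L1 -> okP L2 -> Phi (L1 ++ L2) x -> Phi L1 x.
Hypothesis Phi_app2 : forall L1 L2 x, okP L1 -> okP L2 -> Phi (L1 ++ L2) x -> Phi L2 x.

Definition LB : (E -> Prop) -> Prop := fun V => exists A (L : nat -> list (E -> Prop)),
  partition A /\ (forall k, okP (L k)) /\ V = concat_sets M A (fun k => Phi (L k)).

Lemma LB_filter : stable_filter M S (gen_filter S LB).
Proof.
  apply gen_stable_filter.
  - split; [|split].
    + destruct okP_ex as [L0 H0]. exists (concat_sets M triv (fun _ => Phi L0)).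
      exists triv, (fun _ => L0). split. apply triv_partition. split; auto.
    + intros V [A [L [HA [HL ->]]]]. apply concat_stable; auto.
    + intros D Y HD HY. destruct (choice_nat _ HY) as [A HA]. destruct (choice_nat _ HA) as [L HL].
      assert (EY : Y = fun j => concat_sets M (A j) (fun k => Phi (L j k))).
      { apply functional_extensionality; intro j; apply HL. }
      rewrite EY, (concat_concat HE). 2: auto. 2: intro j; apply HL.
      exists (refine D A), (fun n => L (fst (of_nat n)) (snd (of_nat n))). split.
      apply refine_partition; auto. intro j; apply HL. split; auto. intro n; apply HL.
  - intros V [A [L [HA [HL ->]]]] x. apply concat_sub; auto. intros k y; apply Phi_sub; auto.
  - intros V1 V2 [A1 [L1 [HA1 [HL1 ->]]]] [A2 [L2 [HA2 [HL2 ->]]]].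
    exists (concat_sets M (refine A1 (fun _ => A2))
       (fun n => Phi (L1 (fst (of_nat n)) ++ L2 (snd (of_nat n))))). split.
    { exists (refine A1 (fun _ => A2)), (fun n => L1 (fst (of_nat n)) ++ L2 (snd (of_nat n))).
      split. apply refine_partition; auto. split; auto. }
    intros x Hx. split.
    + rewrite <- (@concat_concat _ _ _ M HE A1 (fun _ => A2) (fun k j => Phi (L1 k ++ L2 j))) in Hx; auto.
      revert Hx. apply concat_mono. intros k y Hy.
      revert Hy. apply concat_sub; auto.
      intros j z Hz. apply (@Phi_app1 (L1 k) (L2 j) z); auto.
    + revert Hx. apply concat_refine_snd; auto.
      intros n y Hy. apply (@Phi_app2 (L1 (fst (of_nat n))) (L2 (snd (of_nat n))) y); auto.
Qed.

Lemma LB_mem L : okP L -> gen_filter S LB (Phi L).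
Proof.
  intro HL. split. intros; eapply Phi_sub; eauto.
  exists (Phi L). split; auto. exists triv, (fun _ => L). split. apply triv_partition. split; auto.
  symmetry; apply concat_const; auto. apply triv_partition.
Qed.
End ListBase.

Section ItoIII.
Context {Omega : Type} {PS : ProbSpace Omega} {E : Type} (M : L0Module PS E).
Context (HE : stable_module M).
Notation meas := (@Pilot.Defs.meas Omega PS).
Notation P := (prob PS).
Notation eqon := (eqon M).
Notation partition := (Pilot.Defs.partition PS).
Context (SS : E -> Prop) (HS : stable_set M SS).
Context (T : (E -> Prop) -> Prop) (HT : is_topology SS T).
Variable O : (E -> Prop) -> Prop.
Hypothesis HO : stable_coll M O.
Hypothesis HOT : forall U, O U -> T U.

Definition StL (L : list (E -> Prop)) := st M (fun U => In U L).
Definition okO (L : list (E -> Prop)) := L <> nil /\ forall U, In U L -> O U.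

Lemma O_stable U : O U -> stable_set M U.
Proof. intro; apply HO; auto. Qed.
Lemma O_sub U x : O U -> U x -> SS x.
Proof. intros h hx. apply (proj1 HT U); auto. Qed.

Lemma StL_stable L V : okO L -> StL L V -> stable_set M V.
Proof. intros [_ HL] H. apply st_stable with (X := fun U => In U L); auto. intros; apply O_stable; auto. Qed.

Lemma StL_sub L V x : okO L -> StL L V -> V x -> SS x.
Proof.
  intros [_ HL] [B [U [HB [HU ->]]]]. apply concat_sub; auto. intros k y; apply O_sub; auto.
Qed.

Lemma StL_mono L L' V : (forall U, In U L -> In U L') -> StL L V -> StL L' V.
Proof. intros h. apply st_mono; auto. Qed.

Lemma okO_app L1 L2 : okO L1 -> okO L2 -> okO (L1 ++ L2).
Proof.
  intros [h1 h2] [h3 h4]. split. destruct L1; simpl; congruence.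
  intros U HU. apply in_app_or in HU. destruct HU; auto.
Qed.

Lemma okO_ex : exists L, okO L.
Proof. destruct HO as [[U0 H0] _]. exists (U0 :: nil). split. congruence. intros U [<-|[]]; auto. Qed.

Lemma StL_ex L : okO L -> exists V, StL L V.
Proof.
  intros [Hn HL]. destruct L as [|U L]. congruence. exists U. apply st_self. left; auto.
  apply O_stable, HL; left; auto.
Qed.

Definition Good (A : Omega -> Prop) := meas A /\ exists L, okO L /\
  forall x, SS x -> exists V, StL L V /\ exists v, V v /\ eqon A x v.

Lemma Good_empty : Good (fun _ => False).
Proof.
  split. apply meas_empty. destruct okO_ex as [L HL]. exists L; split; auto.
  intros x Sx. destruct (StL_ex HL) as [V HV]. exists V; split; auto.
  destruct (stable_ne (StL_stable HL HV)) as [v Hv]. exists v; split; auto. apply eqon_empty.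
Qed.

Lemma Good_union A B : Good A -> Good B -> Good (fun w => A w \/ B w).
Proof.
  intros [HA [L1 [HL1 G1]]] [HB [L2 [HL2 G2]]]. split. apply meas_union; auto.
  exists (L1 ++ L2). split. apply okO_app; auto.
  intros x Sx. destruct (G1 x Sx) as [V1 [HV1 [v1 [Hv1 E1]]]].
  destruct (G2 x Sx) as [V2 [HV2 [v2 [Hv2 E2]]]].
  exists (concat_sets M (part2 A) (fam2 V1 V2)). split.
  { apply st_concat; auto. apply part2_partition; auto. intros [|j]; simpl.
    apply StL_mono with L1; auto. intros; apply in_or_app; auto.
    apply StL_mono with L2; auto. intros; apply in_or_app; auto. }
  destruct (glue2 HE A v1 v2 HA) as [v [Ev1 Ev2]].
  exists v. split.
  { apply (conc2_iff M A V1 V2 v HA (ex_intro _ _ Hv2)). split; eauto. }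
  apply eqon_ext with (fun w => A w \/ (B w /\ ~ A w)). intro w; tauto.
  apply eqon_union; auto. apply meas_diff; auto.
  apply eqon_trans with v1; auto. apply eqon_sym; auto.
  apply eqon_trans with v2. apply eqon_restr; auto. apply meas_compl; auto.
  apply eqon_sym, eqon_restr'; auto. apply meas_compl; auto.
Qed.

Section Rset.
Variable H : Omega -> Prop.
Hypothesis HmH : meas H.
Hypothesis HgoodH : forall K, meas K -> (forall w, K w -> H w) -> Good K -> P K = 0.

Definition Rs (L : list (E -> Prop)) : E -> Prop := fun x => SS x /\
  forall U, In U L -> forall u, U u -> forall A', meas A' -> (forall w, A' w -> H w) ->
    eqon A' x u -> P A' = 0.

Lemma Rs_ne L : okO L -> exists x, Rs L x.
Proof.
  intros HL.
  destruct (stable_ne HS) as [s0 Hs0].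
  set (Nn := fun A => exists x, SS x /\ forall U, In U L -> forall u, U u -> forall A', meas A' ->
     (forall w, A' w -> A w) -> eqon A' x u -> P A' = 0).
  destruct (exhaust PS Nn H) as [G [HmG [HGH [[xs [Sxs Hxs]] HG0]]]]; auto.
  - intros A B HA HB HBA [x [Sx Hx]]. exists x; split; auto. intros U HU u Hu A' HA' Hs.
    eapply Hx; eauto.
  - exists s0; split; auto. intros U HU u Hu A' HA' Hs _.
    apply prob_null_sub with (fun _ => False); auto. apply meas_empty. apply prob_empty.
  - intros D HD Hdis HN. destruct (choice_nat _ HN) as [xn Hxn].
    assert (HDp := disj_partition D HD).
    destruct (concat_exists HE (fun k => match k with 0 => s0 | Datatypes.S n => xn n end) HDp) as [x Hx].
    exists x. split.
    { apply (@stable_glue _ _ _ M _ (disj D)); auto.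
      intros [|n]; eexists; split; [| apply Hx | | apply Hx]; simpl; auto. apply Hxn. }
    intros U HU u Hu A' HA' Hs Heq.
    apply (prob_cover_null PS A' D); auto. intro n.
    destruct (Hxn n) as [_ Hn]. eapply Hn; eauto. apply meas_inter; auto.
    intros w [_ h]; auto.
    assert (HmDn : meas (disj D (Datatypes.S n))) by apply (partition_meas HDp).
    apply eqon_trans with x.
    + apply eqon_sym. apply (eqon_sub (A := disj D (Datatypes.S n))); auto. apply meas_inter; auto.
      intros w [_ h]. apply (proj2 (disj_eq n w Hdis)); auto. apply (Hx (Datatypes.S n)).
    + apply (eqon_sub (A := A')); auto. apply meas_inter; auto. tauto.
  - (* G is the maximal part; show H \ G is null *)
    assert (HKn : P (fun w => H w /\ ~ G w) = 0).
    { set (K' := fun w => H w /\ ~ G w).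
      assert (HmK : meas K') by (apply meas_diff; auto).
      apply HgoodH; auto. intros w [h _]; auto. split; auto. exists L. split; auto.
      intros x Sx.
      set (Vv := fun A => exists V, StL L V /\ exists v, V v /\ eqon A x v).
      destruct (StL_ex HL) as [V0 HV0].
      destruct (stable_ne (StL_stable HL HV0)) as [v0 Hv0].
      destruct (exhaust PS Vv K') as [Gx [HmGx [HGxK [[V [HV [v [Hv Hxv]]]] HGx0]]]]; auto.
      - intros A B HA HB HBA [V [HV [v [Hv Hxv]]]]. exists V; split; auto. exists v; split; auto.
        apply (eqon_sub (A := A)); auto.
      - exists V0; split; auto. exists v0; split; auto. apply eqon_empty.
      - intros D HD Hdis HN. destruct (choice_nat _ HN) as [Vn HVn].
        assert (HDp := disj_partition D HD).
        destruct (choice_nat (fun n v => Vn n v /\ eqon (D n) x v)) as [vn Hvn].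
        { intro n. apply HVn. }
        exists (concat_sets M (disj D) (fun k => match k with 0 => V0 | Datatypes.S n => Vn n end)). split.
        { apply st_concat; auto. intros [|n]; auto. apply HVn. }
        destruct (concat_exists HE (fun k => match k with 0 => v0 | Datatypes.S n => vn n end) HDp) as [v Hv].
        exists v. split. exists (fun k => match k with 0 => v0 | Datatypes.S n => vn n end). split; auto.
        intros [|n]; auto. apply Hvn.
        apply eqon_cup; auto. intro n. apply eqon_trans with (vn n). apply Hvn.
        apply eqon_sym. apply eqon_ext with (disj D (Datatypes.S n)). intro w. apply disj_eq; auto.
        apply (Hv (Datatypes.S n)).
      - assert (HmKG : meas (fun w => K' w /\ ~ Gx w)) by (apply meas_diff; auto).
        assert (Hnull : P (fun w => K' w /\ ~ Gx w) = 0).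
        { apply HG0; auto. intros w [[h1 h2] h3]; auto.
          exists x. split; auto. intros U HU u Hu A' HA' Hs Heq.
          apply HGx0; [ now auto | intros w hw; apply Hs; auto | ].
          exists U. split. apply st_self; auto. apply O_stable, HL; auto.
          exists u; auto. }
        exists V. split; auto. exists v. split; auto.
        apply eqon_ext with (fun w => Gx w \/ (K' w /\ ~ Gx w)).
        intro w; split. intros [h|[h _]]; auto. intro h; destruct (classic (Gx w)); auto.
        apply eqon_union; auto. apply eqon_null; auto. }
    exists xs. split; auto. intros U HU u Hu A' HA' Hs Heq.
    apply (prob_zero_split PS A' G); auto.
    + eapply Hxs; eauto. apply meas_inter; auto. tauto.
      apply (eqon_sub (A := A')); auto. apply meas_inter; auto. tauto.
    + apply prob_null_sub with (fun w => H w /\ ~ G w); auto. apply meas_diff; auto.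
      apply meas_diff; auto. intros w [h1 h2]; auto.
Qed.

Lemma Rs_stable L : okO L -> stable_set M (Rs L).
Proof.
  intro HL. split. apply Rs_ne; auto.
  intros A y HA Hy x Hx. split.
  { apply (@stable_glue _ _ _ M _ A); auto. intro k; exists (y k); split. apply (Hy k). apply Hx. }
  intros U HU u Hu A' HA' Hs Heq.
  apply (prob_cover_null PS A' A); auto. apply (partition_meas HA).
  intros w _. apply HA. intro k.
  assert (HmAk : meas (A k)) by apply (partition_meas HA).
  destruct (Hy k) as [_ Hk]. eapply Hk; eauto. apply meas_inter; auto.
  intros w [h _]; auto.
  apply eqon_trans with x.
  apply eqon_sym. apply (eqon_sub (A := A k)); auto. apply meas_inter; auto. tauto. apply Hx.
  apply (eqon_sub (A := A')); auto. apply meas_inter; auto. tauto.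
Qed.

End Rset.

Theorem i_to_iii : stable_compact M SS T -> (forall x, SS x <-> exists U, O U /\ U x) ->
  exists Ot, stable_finite_sub M O Ot /\ (forall x, SS x <-> exists V, Ot V /\ V x).
Proof.
  intros HK Hcov.
  destruct (esssup PS Good) as [An [HAn Hess]].
  { intros A [h _]; auto. } { apply Good_empty; auto. } { intros; apply Good_union; auto. }
  set (H := fun w => ~ exists n, An n w).
  assert (HmAn : forall n, meas (An n)) by (intro n; apply (HAn n)).
  assert (HmH : meas H) by (apply meas_compl, meas_cunion; auto).
  assert (HgoodH : forall K, meas K -> (forall w, K w -> H w) -> Good K -> P K = 0).
  { intros K HmK HKH HGK. rewrite <- (Hess K HGK). apply prob_ext; intro w; split.
    intro h; split; auto. apply HKH; auto. tauto. }
  destruct (prob_pos_or_zero PS H HmH) as [H0|Hpos].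
  - assert (HL : forall n, exists L, okO L /\ forall x, SS x -> exists V, StL L V /\ exists v, V v /\ eqon (An n) x v).
    { intro n; apply (HAn n). }
    destruct (choice_nat _ HL) as [Ln HLn].
    destruct okO_ex as [L0 HL0].
    set (Ok := fun k => match k with 0 => L0 | Datatypes.S n => Ln n end).
    assert (HOk : forall k, okO (Ok k)) by (intros [|n]; simpl; auto; apply HLn).
    assert (HQ := disj_partition An HmAn).
    exists (fun V => exists Vk : nat -> E -> Prop, (forall k, StL (Ok k) (Vk k)) /\ V = concat_sets M (disj An) Vk).
    split.
    { exists (disj An), Ok. split; auto. split. intro k; apply HOk. intro V; split; auto. }
    intro x; split.
    + intro Sx.
      assert (Hp : forall k, exists p : (E -> Prop) * E, StL (Ok k) (fst p) /\ fst p (snd p) /\ eqon (disj An k) x (snd p)).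
      { intros [|n].
        - destruct (StL_ex HL0) as [V HV]. destruct (stable_ne (StL_stable HL0 HV)) as [v Hv].
          exists (V, v). simpl. split; auto. split; auto. apply eqon_null; auto.
        - destruct (proj2 (HLn n) x Sx) as [V [HV [v [Hv Hxv]]]].
          exists (V, v). simpl. split; auto. split; auto.
          apply (eqon_sub (A := An n)); auto. apply (partition_meas HQ (Datatypes.S n)).
          intros w h; apply disj_sub with (n := n); auto. }
      destruct (choice_nat _ Hp) as [p Hpp].
      exists (concat_sets M (disj An) (fun k => fst (p k))). split.
      exists (fun k => fst (p k)); split; auto. intro k; apply Hpp.
      exists (fun k => snd (p k)). split. intro k; apply Hpp. intro k; apply Hpp.
    + intros [V [[Vk [HVk ->]] HVx]]. revert HVx. apply concat_sub; auto.
      intros k y. apply StL_sub with (Ok k); auto.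
  - exfalso.
    assert (Happ1 : forall L1 L2 x, okO L1 -> okO L2 -> Rs H (L1 ++ L2) x -> Rs H L1 x).
    { intros L1 L2 x _ _ [h1 h2]. split; auto. intros U HU. apply h2. apply in_or_app; auto. }
    assert (Happ2 : forall L1 L2 x, okO L1 -> okO L2 -> Rs H (L1 ++ L2) x -> Rs H L2 x).
    { intros L1 L2 x _ _ [h1 h2]. split; auto. intros U HU. apply h2. apply in_or_app; auto. }
    assert (Hst : forall L, okO L -> stable_set M (Rs H L)) by (intros; apply Rs_stable; auto).
    assert (Hsb : forall L x, okO L -> Rs H L x -> SS x) by (intros L x _ [h _]; auto).
    destruct (HK _ (LB_filter HE HS (Rs H) okO okO_app okO_ex Hst Hsb Happ1 Happ2)) as [x [Sx Hx]].
    destruct (proj1 (Hcov x) Sx) as [U [HU Ux]].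
    assert (HUL : okO (U :: nil)) by (split; [congruence | intros U' [<-|[]]; auto]).
    destruct (Hx U (HOT HU) Ux _ (LB_mem SS (Rs H) okO Hst Hsb (U :: nil) HUL)) as [y [Uy [_ Ry]]].
    assert (P H = 0). { eapply Ry; eauto. left; auto. apply eqon_refl. }
    lra.
Qed.
End ItoIII.

Section IIItoI.
Context {Omega : Type} {PS : ProbSpace Omega} {E : Type} (M : L0Module PS E).
Context (HE : stable_module M).
Notation meas := (@Pilot.Defs.meas Omega PS).
Notation P := (prob PS).
Notation eqon := (eqon M).
Notation partition := (Pilot.Defs.partition PS).
Context (SS : E -> Prop) (HS : stable_set M SS).
Context (T : (E -> Prop) -> Prop) (HT : is_topology SS T) (BT : (E -> Prop) -> Prop)
  (HBT : is_base T BT) (HBTs : stable_coll M BT).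
Variable F : (E -> Prop) -> Prop.
Hypothesis HF : is_filter SS F.
Variable BF : (E -> Prop) -> Prop.
Hypothesis HBF : filter_base F BF.
Hypothesis HBFs : stable_coll M BF.

Lemma BT_open V : BT V -> T V. Proof. apply HBT. Qed.
Lemma BT_stable V : BT V -> stable_set M V. Proof. apply HBTs. Qed.
Lemma BF_stable V : BF V -> stable_set M V. Proof. apply HBFs. Qed.
Lemma BT_nbhd U x : T U -> U x -> exists V, BT V /\ V x /\ forall y, V y -> U y.
Proof. intros; apply HBT; auto. Qed.
Lemma BT_nbhdS x : SS x -> exists V, BT V /\ V x.
Proof. intro H. destruct (BT_nbhd x (proj1 (proj2 HT)) H) as [V [h1 [h2 _]]]; eauto. Qed.
Lemma BT_concat A (Y : nat -> E -> Prop) : partition A -> (forall k, BT (Y k)) -> BT (concat_sets M A Y).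
Proof. intros; apply HBTs; auto. Qed.
Lemma BF_concat A (Y : nat -> E -> Prop) : partition A -> (forall k, BF (Y k)) -> BF (concat_sets M A Y).
Proof. intros; apply HBFs; auto. Qed.
Lemma BF_ne : exists W, BF W.
Proof. apply HBFs. Qed.
Lemma BF_F W : BF W -> F W. Proof. apply HBF. Qed.

Definition cons0 {X : Type} (a : X) (f : nat -> X) : nat -> X :=
  fun k => match k with 0 => a | Datatypes.S n => f n end.

Definition clusterOn (A : Omega -> Prop) (x : E) := forall U, BT U -> U x -> forall W, BF W ->
  exists u w, U u /\ W w /\ eqon A u w.

Lemma local_cluster (B A' : Omega -> Prop) x x' U W : meas B -> meas A' -> (forall w, A' w -> B w) ->
  SS x' -> eqon B x x' -> clusterOn A' x' -> BT U -> U x -> BF W ->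
  exists p w, U p /\ W w /\ eqon A' p w.
Proof.
  intros HB HA' Hs Sx' Hxx' Hc HU Ux HW.
  destruct (BT_nbhdS Sx') as [U' [HU' U'x']].
  assert (HU'' : BT (concat_sets M (part2 B) (fam2 U U'))).
  { apply BT_concat. apply part2_partition; auto. intros [|k]; simpl; auto. }
  assert (Hin : concat_sets M (part2 B) (fam2 U U') x').
  { apply (conc2_iff M B U U' x' HB (ex_intro _ _ U'x')). split.
    exists x; split; auto. apply eqon_sym; auto. exists x'; split; auto. apply eqon_refl. }
  destruct (Hc _ HU'' Hin W HW) as [u [w [Hu [Hw Huw]]]].
  destruct (proj1 (conc2_iff M B U U' u HB (ex_intro _ _ U'x')) Hu) as [[p [Hp Hup]] _].
  exists p, w. split; auto. split; auto. apply eqon_trans with u; auto.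
  apply eqon_sym. apply (eqon_sub (A := B)); auto.
Qed.

Lemma clusterOn_full x G : SS x -> meas G -> P (fun w => ~ G w) = 0 -> clusterOn G x ->
  cluster_point SS T F x.
Proof.
  intros Sx HG H0 Hc. split; auto. intros U HU Ux W HW.
  destruct (BT_nbhd x HU Ux) as [U0 [HU0 [U0x U0U]]].
  destruct (proj2 HBF W HW) as [W' [HW' W'W]].
  destruct (Hc U0 HU0 U0x W' HW') as [u [w [Hu [Hw Huw]]]].
  rewrite (eqon_conull HE HG H0 Huw) in Hu. exists w; auto.
Qed.

Definition sepOn (A : Omega -> Prop) (U W : E -> Prop) := forall A', meas A' -> (forall w, A' w -> A w) ->
  forall u w, U u -> W w -> eqon A' u w -> P A' = 0.

Lemma sepOn_glue Q (Y Z : nat -> E -> Prop) (C : nat -> Omega -> Prop) (A : Omega -> Prop) :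
  partition Q -> (forall k, meas (C k)) -> (forall k, sepOn (C k) (Y k) (Z k)) ->
  (forall k w, A w -> Q k w -> C k w) -> meas A ->
  sepOn A (concat_sets M Q Y) (concat_sets M Q Z).
Proof.
  intros HQ HC Hsep Hsub HA A' HA' HA'A u w Hu Hw Huw.
  apply (prob_cover_null PS A' Q); auto. apply (partition_meas HQ). intros w' _; apply HQ.
  intro k. assert (HQk : meas (Q k)) by apply (partition_meas HQ).
  destruct (proj1 (concat_iff M Q Y u) Hu k) as [y [Hy Huy]].
  destruct (proj1 (concat_iff M Q Z w) Hw k) as [z [Hz Hwz]].
  apply (Hsep k) with y z; auto. apply meas_inter; auto.
  intros w' [h1 h2]. apply Hsub; auto.
  apply eqon_trans with u. apply eqon_sym, (eqon_sub (A := Q k)); auto. apply meas_inter; auto. tauto.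
  apply eqon_trans with w. apply (eqon_sub (A := A')); auto. apply meas_inter; auto. tauto.
  apply (eqon_sub (A := Q k)); auto. apply meas_inter; auto. tauto.
Qed.

Definition Cp A := exists x, SS x /\ clusterOn A x.

Lemma clusterOn_sub A B x : meas A -> meas B -> (forall w, B w -> A w) -> clusterOn A x -> clusterOn B x.
Proof.
  intros HA HB Hs Hc U HU Ux W HW. destruct (Hc U HU Ux W HW) as [u [w [h1 [h2 h3]]]].
  exists u, w; split; auto. split; auto. apply (eqon_sub (A := A)); auto.
Qed.

Lemma C_exhaust : exists G, meas G /\ Cp G /\
  forall A', meas A' -> (forall w, A' w -> ~ G w) -> Cp A' -> P A' = 0.
Proof.
  destruct (stable_ne HS) as [x0 Sx0].
  destruct (exhaust PS Cp (fun _ => True)) as [G [HG [_ [HCG HG0]]]].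
  - apply meas_full.
  - intros A B HA HB Hs [x [Sx Hx]]. exists x; split; auto. apply clusterOn_sub with A; auto.
  - exists x0. split; auto. intros U HU Ux W HW. destruct (stable_ne (BF_stable HW)) as [w Hw].
    exists x0, w. split; auto. split; auto. apply eqon_empty.
  - intros D HD Hdis HCn. destruct (choice_nat _ HCn) as [xn Hxn].
    assert (HQ := disj_partition D HD).
    destruct (concat_exists HE (cons0 x0 xn) HQ) as [x Hx].
    exists x. split.
    { apply (@stable_glue _ _ _ M _ (disj D)); auto.
      intros [|n]; eexists; split; [| apply Hx | | apply Hx]; simpl; auto. apply Hxn. }
    intros U HU Ux W HW.
    assert (Hpw : forall n, exists pw : E * E, U (fst pw) /\ W (snd pw) /\ eqon (D n) (fst pw) (snd pw)).
    { intro n. destruct (local_cluster (B := disj D (Datatypes.S n)) (A' := D n) (x := x) (x' := xn n) (U := U) (W := W))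
        as [p [w [h1 [h2 h3]]]]; auto.
      apply (partition_meas HQ). intros w h; apply (proj2 (disj_eq n w Hdis)); auto.
      apply Hxn. apply (Hx (Datatypes.S n)). apply Hxn.
      exists (p, w); auto. }
    destruct (choice_nat _ Hpw) as [pw Hpw'].
    destruct (stable_ne (BF_stable HW)) as [w0 Hw0].
    destruct (concat_exists HE (cons0 x (fun n => fst (pw n))) HQ) as [u Hu].
    destruct (concat_exists HE (cons0 w0 (fun n => snd (pw n))) HQ) as [w Hw].
    exists u, w. split; [|split].
    + apply (@stable_glue _ _ _ M _ (disj D)); auto. apply BT_stable; auto.
      intros [|n]; eexists; split; [| apply Hu | | apply Hu]; simpl; auto. apply Hpw'.
    + apply (@stable_glue _ _ _ M _ (disj D)); auto. apply BF_stable; auto.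
      intros [|n]; eexists; split; [| apply Hw | | apply Hw]; simpl; auto. apply Hpw'.
    + apply eqon_cup; auto. intro n.
      assert (HDn : forall x y, eqon (disj D (Datatypes.S n)) x y -> eqon (D n) x y).
      { intros a b h. apply eqon_ext with (disj D (Datatypes.S n)); auto. intro w'; apply disj_eq; auto. }
      apply eqon_trans with (fst (pw n)). apply HDn, (Hu (Datatypes.S n)).
      apply eqon_trans with (snd (pw n)). apply Hpw'. apply eqon_sym, HDn, (Hw (Datatypes.S n)).
  - exists G. split; [auto|split; [auto|]]. intros A' HA' Hs HC. apply HG0; auto.
Qed.

Section Sep.
Variable H : Omega -> Prop.
Hypothesis HmH : meas H.
Hypothesis HCnull : forall A', meas A' -> (forall w, A' w -> H w) -> Cp A' -> P A' = 0.

Lemma agree_exhaust U W K : stable_set M U -> stable_set M W -> meas K ->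
  exists G, meas G /\ (forall w, G w -> K w) /\ (exists u w, U u /\ W w /\ eqon G u w) /\
  sepOn (fun w => K w /\ ~ G w) U W.
Proof.
  intros HU HW HK.
  destruct (stable_ne HU) as [u0 Hu0]. destruct (stable_ne HW) as [w0 Hw0].
  destruct (exhaust PS (fun A => exists u w, U u /\ W w /\ eqon A u w) K) as [G [HG [HGK [HGa HG0]]]]; auto.
  - intros A B HA HB Hs [u [w [h1 [h2 h3]]]]. exists u, w; split; auto. split; auto.
    apply (eqon_sub (A := A)); auto.
  - exists u0, w0. split; auto. split; auto. apply eqon_empty.
  - intros D HD Hdis Hn. destruct (choice_nat (fun n (p : E * E) => U (fst p) /\ W (snd p) /\ eqon (D n) (fst p) (snd p))) as [pw Hpw].
    { intro n. destruct (Hn n) as [u [w h]]. exists (u, w); auto. }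
    assert (HQ := disj_partition D HD).
    destruct (concat_exists HE (cons0 u0 (fun n => fst (pw n))) HQ) as [u Hu].
    destruct (concat_exists HE (cons0 w0 (fun n => snd (pw n))) HQ) as [w Hw].
    exists u, w. split; [|split].
    + apply (@stable_glue _ _ _ M _ (disj D)); auto.
      intros [|n]; eexists; split; [| apply Hu | | apply Hu]; simpl; auto. apply Hpw.
    + apply (@stable_glue _ _ _ M _ (disj D)); auto.
      intros [|n]; eexists; split; [| apply Hw | | apply Hw]; simpl; auto. apply Hpw.
    + apply eqon_cup; auto. intro n.
      assert (HDn : forall x y, eqon (disj D (Datatypes.S n)) x y -> eqon (D n) x y).
      { intros a b h. apply eqon_ext with (disj D (Datatypes.S n)); auto. intro w'; apply disj_eq; auto. }
      apply eqon_trans with (fst (pw n)). apply HDn, (Hu (Datatypes.S n)).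
      apply eqon_trans with (snd (pw n)). apply Hpw. apply eqon_sym, HDn, (Hw (Datatypes.S n)).
  - exists G. split; auto. split; auto. split; auto.
    intros A' HA' Hs u w Hu Hw Huw. apply HG0; auto. eauto.
Qed.

Lemma sep_exists x : SS x -> exists U, BT U /\ U x /\ exists W, BF W /\ sepOn H U W.
Proof.
  intro Sx.
  destruct (BT_nbhdS Sx) as [U0 [HU0 U0x]]. destruct BF_ne as [W0 HW0].
  set (Sp := fun A => exists U, BT U /\ U x /\ exists W, BF W /\ sepOn A U W).
  destruct (exhaust PS Sp H) as [G [HG [HGH [[U [HU [Ux [W [HW HsepG]]]]] HG0]]]]; auto.
  - intros A B HA HB Hs [U [h1 [h2 [W [h3 h4]]]]]. exists U; split; auto. split; auto. exists W; split; auto.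
    intros A' HA' Hs' u w Hu Hw Huw. apply (h4 A' HA') with u w; auto.
  - exists U0. split; auto. split; auto. exists W0. split; auto.
    intros A' HA' Hs' u w _ _ _. apply prob_null_sub with (fun _ => False); auto.
    apply meas_empty. apply prob_empty.
  - intros D HD Hdis Hn.
    destruct (choice_nat (fun n (p : (E -> Prop) * (E -> Prop)) => BT (fst p) /\ fst p x /\ BF (snd p) /\ sepOn (D n) (fst p) (snd p))) as [UW HUW].
    { intro n. destruct (Hn n) as [U [h1 [h2 [W [h3 h4]]]]]. exists (U, W); auto. }
    assert (HQ := disj_partition D HD).
    exists (concat_sets M (disj D) (cons0 U0 (fun n => fst (UW n)))). split.
    { apply BT_concat; auto. intros [|n]; simpl; auto. apply HUW. }
    split.
    { exists (fun _ => x). split. intros [|n]; simpl; auto. apply HUW. intro; apply eqon_refl. }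
    exists (concat_sets M (disj D) (cons0 W0 (fun n => snd (UW n)))). split.
    { apply BF_concat; auto. intros [|n]; simpl; auto. apply HUW. }
    apply sepOn_glue with (C := cons0 (fun _ => False) D); auto.
    + intros [|n]; simpl; auto. apply meas_empty.
    + intros [|n]; simpl. intros A' HA' Hs' u w _ _ _. apply prob_null_sub with (fun _ => False); auto.
      apply meas_empty. apply prob_empty. apply HUW.
    + intros [|n] w Hw Hq; simpl in *. apply Hq; auto. tauto.
    + apply meas_cunion; auto.
  - set (K := fun w => H w /\ ~ G w).
    assert (HK : meas K) by (apply meas_diff; auto).
    assert (HK0 : P K = 0).
    { destruct (prob_pos_or_zero PS K HK) as [h|Hpos]; auto. exfalso.
      assert (Hnc : ~ clusterOn K x).
      { intro Hc. assert (P K = 0). apply HCnull; auto. intros w [h _]; auto. exists x; auto. lra. }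
      apply Hnc. intros U1 HU1 U1x W1 HW1. apply NNPP; intro Hna.
      destruct (@agree_exhaust U1 W1 K (BT_stable HU1) (BF_stable HW1) HK) as [G' [HG' [HG'K [[u [w [Hu [Hw Huw]]]] Hsep]]]].
      assert (HK' : meas (fun w => K w /\ ~ G' w)) by (apply meas_diff; auto).
      destruct (prob_pos_or_zero PS _ HK') as [h0|hpos].
      + apply Hna. exists u, w. split; auto. split; auto.
        apply eqon_ext with (fun w => G' w \/ (K w /\ ~ G' w)).
        intro w'; split. intros [h|[h _]]; auto. intro h; destruct (classic (G' w')); auto.
        apply eqon_union; auto. apply eqon_null; auto.
      + assert (P (fun w => K w /\ ~ G' w) = 0).
        { apply HG0; auto. intros w' [[h1 h2] _]; auto.
          exists U1. split; auto. split; auto. exists W1. split; auto. }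
        lra. }
    exists U. split; auto. split; auto. exists W. split; auto.
    intros A' HA' Hs u w Hu Hw Huw.
    apply (prob_zero_split PS A' G); auto.
    + apply (HsepG (fun w => A' w /\ G w)) with u w; auto. apply meas_inter; auto. tauto.
      apply (eqon_sub (A := A')); auto. apply meas_inter; auto. tauto.
    + apply prob_null_sub with K; auto. apply meas_diff; auto.
      intros w' [h1 h2]; split; auto.
Qed.
End Sep.
End IIItoI.

Section IIItoI_main.
Context {Omega : Type} {PS : ProbSpace Omega} {E : Type} (M : L0Module PS E).
Context (HE : stable_module M).
Notation meas := (@Pilot.Defs.meas Omega PS).
Notation P := (prob PS).
Notation eqon := (eqon M).
Notation partition := (Pilot.Defs.partition PS).
Context (SS : E -> Prop) (HS : stable_set M SS).
Context (T : (E -> Prop) -> Prop) (HT : is_topology SS T) (BT : (E -> Prop) -> Prop)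
  (HBT : is_base T BT) (HBTs : stable_coll M BT).
Hypothesis III : forall O : (E -> Prop) -> Prop, stable_coll M O ->
        (forall U, O U -> T U) ->
        (forall x, SS x <-> exists U, O U /\ U x) ->
        exists Ot, stable_finite_sub M O Ot /\
          (forall x, SS x <-> exists V, Ot V /\ V x).

Theorem iii_to_i : stable_compact M SS T.
Proof.
  intros F [HF [BF [HBF HBFs]]]. apply NNPP; intro Hno.
  destruct (C_exhaust HE HS HT HBT HBTs HBFs) as [G [HG [[xs [Sxs Hxs]] HG0]]].
  set (H := fun w => ~ G w).
  assert (HmH : meas H) by (apply meas_compl; auto).
  destruct (prob_pos_or_zero PS H HmH) as [H0|Hpos].
  { apply Hno. exists xs. apply (clusterOn_full HE SS HBT HBF (G := G)); auto. }
  assert (HCnull : forall A', meas A' -> (forall w, A' w -> H w) -> Cp M SS BT BF A' -> P A' = 0).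
  { intros; apply HG0; auto. }
  set (O := fun U => BT U /\ exists W, BF W /\ sepOn M H U W).
  assert (HO : stable_coll M O).
  { split; [|split].
    - destruct (stable_ne HS) as [x0 Sx0].
      destruct (sep_exists HE HT HBT HBTs HBFs H HmH HCnull x0 Sx0) as [U [HU [_ HW]]].
      exists U; split; auto.
    - intros U [HU _]. apply HBTs; auto.
    - intros A Y HA HY.
      destruct (choice_nat (fun k W => BF W /\ sepOn M H (Y k) W)) as [Wk HWk].
      { intro k; apply HY. }
      split. apply HBTs; auto. intro k; apply HY.
      exists (concat_sets M A Wk). split. apply HBFs; auto. intro; apply HWk.
      apply sepOn_glue with (C := fun _ => H); auto. intro k; apply HWk. }
  assert (HOT : forall U, O U -> T U) by (intros U [HU _]; apply HBT; auto).
  assert (Hcov : forall x, SS x <-> exists U, O U /\ U x).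
  { intro x; split.
    - intro Sx. destruct (sep_exists HE HT HBT HBTs HBFs H HmH HCnull x Sx) as [U [HU [Ux HW]]].
      exists U; split; auto. split; auto.
    - intros [U [HU Ux]]. apply (proj1 HT U); auto. }
  destruct (III HO HOT Hcov) as [Ot [[A [Ok [HA [HOk HOt]]]] HcovOt]].
  destruct (choice_gen (fun (U : E -> Prop) W => O U -> BF W /\ sepOn M H U W)) as [g Hg].
  { intro U. destruct (classic (O U)) as [h|h]. destruct h as [_ [W HW]]. exists W; auto.
    destruct (proj1 HBFs) as [W HW]. exists W; tauto. }
  assert (Hw : forall k, exists w, SS w /\ forall U, In U (map g (Ok k)) -> U w).
  { intro k. apply (filter_ne (S := SS)) with (F := F); auto. apply filter_list; auto.
    intros U' HU'. apply in_map_iff in HU'. destruct HU' as [U [<- HU]].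
    apply HBF. apply Hg. apply HOk with k; auto. }
  destruct (choice_nat _ Hw) as [w Hww].
  destruct (concat_exists HE w HA) as [z Hz].
  assert (Sz : SS z).
  { apply (@stable_glue _ _ _ M _ A); auto. intro k; exists (w k); split. apply (proj1 (Hww k)). apply Hz. }
  destruct (proj1 (HcovOt z) Sz) as [V [HV Vz]].
  destruct (proj1 (HOt V) HV) as [Vk [HVk ->]].
  assert (P H = 0).
  { apply (prob_cover_null PS H A); auto. apply (partition_meas HA). intros w' _; apply HA.
    intro k. assert (HAk : meas (A k)) by apply (partition_meas HA).
    destruct (proj1 (concat_iff M A Vk z) Vz k) as [v [Hv Hzv]].
    destruct (HVk k) as [B [U' [HB [HU' EV]]]]. rewrite EV in Hv.
    apply (prob_cover_null PS _ B); auto. apply meas_inter; auto. apply (partition_meas HB).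
    intros w' _; apply HB. intro j. assert (HBj : meas (B j)) by apply (partition_meas HB).
    destruct (proj1 (concat_iff M B U' v) Hv j) as [l [Hl Hvl]].
    assert (HOU : O (U' j)) by (apply HOk with k; auto).
    destruct (Hg _ HOU) as [_ Hsep].
    apply (Hsep _ (meas_inter PS _ _ (meas_inter PS _ _ HmH HAk) HBj)) with l (w k); auto.
    + intros w' [[h _] _]; auto.
    + apply Hww; auto. apply in_map; auto.
    + apply eqon_trans with v.
      apply eqon_sym. apply (eqon_sub (A := B j)); auto. repeat apply meas_inter; auto. tauto.
      apply eqon_trans with z.
      apply eqon_sym. apply (eqon_sub (A := A k)); auto. repeat apply meas_inter; auto. tauto.
      apply (eqon_sub (A := A k)); auto. repeat apply meas_inter; auto. tauto. apply Hz. }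
  lra.
Qed.
End IIItoI_main.

Unset Implicit Arguments.

Theorem proposition5 (Omega : Type) (PS : ProbSpace Omega) (E : Type)
  (M : L0Module PS E) (HE : stable_module M)
  (S : E -> Prop) (HS : stable_set M S)
  (T : (E -> Prop) -> Prop) (HT : stable_topology M S T) :
  (stable_compact M S T <->
     (forall F, stable_ultrafilter M S F -> exists x, cluster_point S T F x)) /\
  (stable_compact M S T <->
     (forall O : (E -> Prop) -> Prop, stable_coll M O ->
        (forall U, O U -> T U) ->
        (forall x, S x <-> exists U, O U /\ U x) ->
        exists Ot, stable_finite_sub M O Ot /\
          (forall x, S x <-> exists V, Ot V /\ V x))) /\
  (stable_compact M S T <->
     (forall C : (E -> Prop) -> Prop, stable_coll M C ->
        (forall U, C U -> closed_in S T U) ->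
        (forall Ct, stable_finite_sub M C Ct -> exists x, forall V, Ct V -> V x) ->
        exists x, forall V, C V -> V x)).
Proof.
  destruct HT as [HTt [BT [HBT HBTs]]].
  split; [|split].
  - split.
    + intros HK F [HF _]. apply HK; auto.
    + intro H. apply (ii_to_i HE HS H).
  - split.
    + intros HK O HO HOT Hcov. apply (i_to_iii HE HS HTt HO HOT HK Hcov).
    + intro H. apply (iii_to_i HE HS HTt HBT HBTs H).
  - split.
    + intros HK C HC HCc FIP. apply (i_to_iv HE HS HC HCc FIP HK).
    + intro H. apply (iv_to_i HE HS HTt HBT HBTs H).
Qed.
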